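(* A sequent $\Gamma\vdash M$ is provable in system $\mathcal S$ if and only if it is provable in system $\mathcal L$.
   Context: Fix countably infinite sets of names and variables and the constructors $\mathsf{pub}$ (unary) and $\mathsf{sign},\mathsf{blind},\langle\cdot,\cdot\rangle,\{\cdot\}_{\cdot}$ (binary). Let $E$ be an equational theory whose signature $\Sigma_E$ is disjoint from the constructors, containing at most one associative-commutative (AC) binary symbol $\oplus$, presented by a rewrite system $R_E$ terminating and confluent modulo AC of $\oplus$. Terms: names, variables, $\mathsf{pub}(M)$, $\mathsf{sign}(M,N)$, $\mathsf{blind}(M,N)$, $\langle M,N\rangle$, $\{M\}_N$, $g(M_1,\dots,M_j)$ with $g\in\Sigma_E$; all ground. $\equiv$ is equality modulo AC, $\approx_E$ equality modulo $E$. A term is guarded if it is a name, a variable, or headed by a constructor. An $E$-context is a term with holes built only from symbols of $\Sigma_E$. Sequents $\Gamma\vdash M$ ($\Gamma$ a finite set of terms) have all terms in $R_E$-normal form modulo AC; $\Gamma,M$ means $\Gamma\cup\{M\}$. System $\mathcal S$: (id) $\Gamma\vdash M$ with no premise if $M\approx_E C[M_1,\dots,M_k]$ for an $E$-context $C$ and $M_i\in\Gamma$; (cut) from $\Gamma\vdash M$, $\Gamma,M\vdash T$ infer $\Gamma\vdash T$; ($p_L$) from $\Gamma,\langle M,N\rangle,M,N\vdash T$ infer $\Gamma,\langle M,N\rangle\vdash T$; ($p_R$) from $\Gamma\vdash M$, $\Gamma\vdash N$ infer $\Gamma\vdash\langle M,N\rangle$; ($e_L$) from $\Gamma,\{M\}_K\vdash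 K$ and $\Gamma,\{M\}_K,M,K\vdash N$ infer $\Gamma,\{M\}_K\vdash N$; ($e_R$) from $\Gamma\vdash M$, $\Gamma\vdash K$ infer $\Gamma\vdash\{M\}_K$; ($\mathsf{sign}_L$) from $\Gamma,\mathsf{sign}(M,K),\mathsf{pub}(L),M\vdash N$ infer $\Gamma,\mathsf{sign}(M,K),\mathsf{pub}(L)\vdash N$ provided $K\equiv L$; ($\mathsf{sign}_R$) from $\Gamma\vdash M$, $\Gamma\vdash K$ infer $\Gamma\vdash\mathsf{sign}(M,K)$; ($\mathsf{blind}_{L1}$) from $\Gamma,\mathsf{blind}(M,K)\vdash K$ and $\Gamma,\mathsf{blind}(M,K),M,K\vdash N$ infer $\Gamma,\mathsf{blind}(M,K)\vdash N$; ($\mathsf{blind}_R$) from $\Gamma\vdash M$, $\Gamma\vdash K$ infer $\Gamma\vdash\mathsf{blind}(M,K)$; ($\mathsf{blind}_{L2}$) from $\Gamma,\mathsf{sign}(\mathsf{blind}(M,R),K)\vdash R$ and $\Gamma,\mathsf{sign}(\mathsf{blind}(M,R),K),\mathsf{sign}(M,K),R\vdash N$ infer $\Gamma,\mathsf{sign}(\mathsf{blind}(M,R),K)\vdash N$; ($gs$) from $\Gamma\vdash A$, $\Gamma,A\vdash M$ infer $\Gamma\vdash M$, provided $A$ is a guarded subterm of a term in $\Gamma\cup\{M\}$. $\Gamma\Vdash_{\mathcal R}M$ means $\Gamma\vdash M$ is derivable in $\mathcal S$ using only (id), $p_R,e_R,\mathsf{sign}_R,\mathsf{blind}_R$. System $\mathcal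 L$: ($r$) $\Gamma\vdash M$ with no premise if $\Gamma\Vdash_{\mathcal R}M$; ($lp$) from $\Gamma,\langle M,N\rangle,M,N\vdash T$ infer $\Gamma,\langle M,N\rangle\vdash T$; ($le$) from $\Gamma,\{M\}_K,M,K\vdash N$ infer $\Gamma,\{M\}_K\vdash N$ provided $\Gamma,\{M\}_K\Vdash_{\mathcal R}K$; ($\mathsf{sign}$) from $\Gamma,\mathsf{sign}(M,K),\mathsf{pub}(L),M\vdash N$ infer $\Gamma,\mathsf{sign}(M,K),\mathsf{pub}(L)\vdash N$ provided $K\equiv L$; ($\mathsf{blind}_1$) from $\Gamma,\mathsf{blind}(M,K),M,K\vdash N$ infer $\Gamma,\mathsf{blind}(M,K)\vdash N$ provided $\Gamma,\mathsf{blind}(M,K)\Vdash_{\mathcal R}K$; ($\mathsf{blind}_2$) from $\Gamma,\mathsf{sign}(\mathsf{blind}(M,R),K),\mathsf{sign}(M,K),R\vdash N$ infer $\Gamma,\mathsf{sign}(\mathsf{blind}(M,R),K)\vdash N$ provided $\Gamma,\mathsf{sign}(\mathsf{blind}(M,R),K)\Vdash_{\mathcal R}R$; ($ls$) from $\Gamma,A\vdash M$ infer $\Gamma\vdash M$ provided $A$ is a guarded subterm of a term in $\Gamma\cup\{M\}$ and $\Gamma\Vdash_{\mathcal R}A$. *)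

(* Defs.v *)
From Stdlib Require Import List Relations.
Import ListNotations.

Section Intruder.

(* Signature Sigma_E of the equational theory: symbols of type F with arities;
   it is disjoint from the constructors by construction of [term]. *)
Variable F : Type.
Variable arity : F -> nat.
Variable oplus : option F.

Inductive term : Type :=
| Name  : nat -> term
| Var   : nat -> term
| Pub   : term -> term
| Sign  : term -> term -> term
| Blind : term -> term -> term
| Pair  : term -> term -> term
| Enc   : term -> term -> term            (* { M }_K  is  Enc M K *)
| App   : F -> list term -> term.

Inductive wf : term -> Prop :=
| wf_Name n : wf (Name n)
| wf_Var n : wf (Var n)
| wf_Pub t : wf t -> wf (Pub t)
| wf_Sign s t : wf s -> wf t -> wf (Sign s t)
| wf_Blind s t : wf s -> wf t -> wf (Blind s t)
| wf_Pair s t : wf s -> wf t -> wf (Pair s t)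
| wf_Enc s t : wf s -> wf t -> wf (Enc s t)
| wf_App f args : length args = arity f -> (forall a, In a args -> wf a) ->
    wf (App f args).

Inductive pat : Type :=
| PVar : nat -> pat
| PApp : F -> list pat -> pat.

Inductive wf_pat : pat -> Prop :=
| wfp_Var x : wf_pat (PVar x)
| wfp_App f ps : length ps = arity f -> (forall p, In p ps -> wf_pat p) ->
    wf_pat (PApp f ps).

Fixpoint inst (sigma : nat -> term) (p : pat) : term :=
  match p with
  | PVar x => sigma x
  | PApp f ps => App f (map (inst sigma) ps)
  end.

Inductive ctx_closure (r : term -> term -> Prop) : term -> term -> Prop :=
| cc_top s t : r s t -> ctx_closure r s t
| cc_Pub s t : ctx_closure r s t -> ctx_closure r (Pub s) (Pub t)
| cc_Sign1 s t u : ctx_closure r s t -> ctx_closure r (Sign s u) (Sign t u)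
| cc_Sign2 s t u : ctx_closure r s t -> ctx_closure r (Sign u s) (Sign u t)
| cc_Blind1 s t u : ctx_closure r s t -> ctx_closure r (Blind s u) (Blind t u)
| cc_Blind2 s t u : ctx_closure r s t -> ctx_closure r (Blind u s) (Blind u t)
| cc_Pair1 s t u : ctx_closure r s t -> ctx_closure r (Pair s u) (Pair t u)
| cc_Pair2 s t u : ctx_closure r s t -> ctx_closure r (Pair u s) (Pair u t)
| cc_Enc1 s t u : ctx_closure r s t -> ctx_closure r (Enc s u) (Enc t u)
| cc_Enc2 s t u : ctx_closure r s t -> ctx_closure r (Enc u s) (Enc u t)
| cc_App f l1 l2 s t : ctx_closure r s t ->
    ctx_closure r (App f (l1 ++ s :: l2)) (App f (l1 ++ t :: l2)).

Inductive ac_axiom : term -> term -> Prop :=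
| ac_assoc f a b c : oplus = Some f ->
    ac_axiom (App f [a; App f [b; c]]) (App f [App f [a; b]; c])
| ac_comm f a b : oplus = Some f ->
    ac_axiom (App f [a; b]) (App f [b; a]).

Definition acstep : term -> term -> Prop := ctx_closure ac_axiom.

Definition ac_eq : term -> term -> Prop := clos_refl_sym_trans term acstep.

Section Rewriting.
Variable RE : list (pat * pat).

Inductive rule_top : term -> term -> Prop :=
| rt_inst l r sigma : In (l, r) RE -> rule_top (inst sigma l) (inst sigma r).

Definition rstep : term -> term -> Prop := ctx_closure rule_top.

Definition rstepAC (s t : term) : Prop :=
  wf s /\ wf t /\ exists s' t', ac_eq s s' /\ rstep s' t' /\ ac_eq t' t.

Definition normal (t : term) : Prop := forall u, ~ rstepAC t u.

Definition terminating_modAC : Prop :=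
  forall t, wf t -> Acc (fun u v => rstepAC v u) t.

Definition confluent_modAC : Prop :=
  forall s t1 t2, wf s ->
    clos_refl_trans term rstepAC s t1 -> clos_refl_trans term rstepAC s t2 ->
    exists u1 u2, clos_refl_trans term rstepAC t1 u1 /\
                  clos_refl_trans term rstepAC t2 u2 /\ ac_eq u1 u2.

Definition estep (s t : term) : Prop :=
  wf s /\ wf t /\ (rstep s t \/ acstep s t).
Definition eqE : term -> term -> Prop := clos_refl_sym_trans term estep.

(* Terms of the form C[M1,...,Mk] with C an E-context (built only from
   symbols of Sigma_E and holes) and every Mi in Gamma. *)
Inductive ectx (Gamma : list term) : term -> Prop :=
| ectx_hole t : In t Gamma -> ectx Gamma t
| ectx_App f args : length args = arity f ->
    (forall a, In a args -> ectx Gamma a) -> ectx Gamma (App f args).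

Inductive isub : term -> term -> Prop :=
| is_Pub t : isub t (Pub t)
| is_Sign1 s t : isub s (Sign s t)
| is_Sign2 s t : isub t (Sign s t)
| is_Blind1 s t : isub s (Blind s t)
| is_Blind2 s t : isub t (Blind s t)
| is_Pair1 s t : isub s (Pair s t)
| is_Pair2 s t : isub t (Pair s t)
| is_Enc1 s t : isub s (Enc s t)
| is_Enc2 s t : isub t (Enc s t)
| is_App f args a : In a args -> isub a (App f args).

Definition subterm : term -> term -> Prop := clos_refl_trans term isub.

Definition guarded (t : term) : Prop :=
  match t with App _ _ => False | _ => True end.

Definition gsub (A : term) (Gamma : list term) (M : term) : Prop :=
  guarded A /\ exists u, (In u Gamma \/ u = M) /\ subterm A u.

(* a sequent Gamma |- M: all its terms are (well-formed and) in normal form.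
   Contexts are finite sets, represented by lists (only membership matters);
   "Gamma, M" is M :: Gamma. *)
Definition seq_ok (Gamma : list term) (M : term) : Prop :=
  (forall t, In t Gamma -> wf t /\ normal t) /\ wf M /\ normal M.

Definition id_cond (Gamma : list term) (M : term) : Prop :=
  exists C, ectx Gamma C /\ eqE M C.

Inductive provS : list term -> term -> Prop :=
| S_id G M : seq_ok G M -> id_cond G M -> provS G M
| S_cut G M T : seq_ok G T -> provS G M -> provS (M :: G) T -> provS G T
| S_pL G M N T : seq_ok G T -> In (Pair M N) G ->
    provS (M :: N :: G) T -> provS G T
| S_pR G M N : seq_ok G (Pair M N) -> provS G M -> provS G N ->
    provS G (Pair M N)
| S_eL G M K N : seq_ok G N -> In (Enc M K) G ->
    provS G K -> provS (M :: K :: G) N -> provS G N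
| S_eR G M K : seq_ok G (Enc M K) -> provS G M -> provS G K ->
    provS G (Enc M K)
| S_signL G M K L N : seq_ok G N -> In (Sign M K) G -> In (Pub L) G ->
    ac_eq K L -> provS (M :: G) N -> provS G N
| S_signR G M K : seq_ok G (Sign M K) -> provS G M -> provS G K ->
    provS G (Sign M K)
| S_blindL1 G M K N : seq_ok G N -> In (Blind M K) G ->
    provS G K -> provS (M :: K :: G) N -> provS G N
| S_blindR G M K : seq_ok G (Blind M K) -> provS G M -> provS G K ->
    provS G (Blind M K)
| S_blindL2 G M R K N : seq_ok G N -> In (Sign (Blind M R) K) G ->
    provS G R -> provS (Sign M K :: R :: G) N -> provS G N
| S_gs G A M : seq_ok G M -> gsub A G M ->
    provS G A -> provS (A :: G) M -> provS G M.

Inductive provR : list term -> term -> Prop :=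
| R_id G M : seq_ok G M -> id_cond G M -> provR G M
| R_pR G M N : seq_ok G (Pair M N) -> provR G M -> provR G N ->
    provR G (Pair M N)
| R_eR G M K : seq_ok G (Enc M K) -> provR G M -> provR G K ->
    provR G (Enc M K)
| R_signR G M K : seq_ok G (Sign M K) -> provR G M -> provR G K ->
    provR G (Sign M K)
| R_blindR G M K : seq_ok G (Blind M K) -> provR G M -> provR G K ->
    provR G (Blind M K).

Inductive provL : list term -> term -> Prop :=
| L_r G M : seq_ok G M -> provR G M -> provL G M
| L_lp G M N T : seq_ok G T -> In (Pair M N) G ->
    provL (M :: N :: G) T -> provL G T
| L_le G M K N : seq_ok G N -> In (Enc M K) G -> provR G K ->
    provL (M :: K :: G) N -> provL G N
| L_sign G M K L N : seq_ok G N -> In (Sign M K) G -> In (Pub L) G ->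
    ac_eq K L -> provL (M :: G) N -> provL G N
| L_blind1 G M K N : seq_ok G N -> In (Blind M K) G -> provR G K ->
    provL (M :: K :: G) N -> provL G N
| L_blind2 G M R K N : seq_ok G N -> In (Sign (Blind M R) K) G -> provR G R ->
    provL (Sign M K :: R :: G) N -> provL G N
| L_ls G A M : seq_ok G M -> gsub A G M -> provR G A ->
    provL (A :: G) M -> provL G M.

End Rewriting.
End Intruder.

Arguments Name {F}.
Arguments Var {F}.
Arguments Pub {F}.
Arguments Sign {F}.
Arguments Blind {F}.
Arguments Pair {F}.
Arguments Enc {F}.
Arguments App {F}.
Arguments PVar {F}.
Arguments PApp {F}.
Arguments wf {F}.
Arguments wf_pat {F}.
Arguments terminating_modAC {F}.
Arguments confluent_modAC {F}.
Arguments provS {F}.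
Arguments provL {F}.
Arguments provR {F}.

(* Main.v *)
Require Import Defs.
From Stdlib Require Import List Relations Lia Arith Classical ClassicalEpsilon.
Import ListNotations.

Section Main.
Variable F : Type.
Variable arity : F -> nat.
Variable oplus : option F.
Variable RE : list (pat F * pat F).
Hypothesis Hoplus : forall f, oplus = Some f -> arity f = 2.
Hypothesis Hrules : forall l r, In (l, r) RE -> wf_pat arity l /\ wf_pat arity r.
Hypothesis Hterm : terminating_modAC arity oplus RE.
Hypothesis Hconf : confluent_modAC arity oplus RE.

Local Notation tm := (term F).
Local Notation wf := (wf arity).
Local Notation acstep := (acstep F oplus).
Local Notation ac := (ac_eq F oplus).
Local Notation rstep := (rstep F RE).
Local Notation rAC := (rstepAC F arity oplus RE).
Local Notation normal := (normal F arity oplus RE).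
Local Notation eqE := (eqE F arity oplus RE).
Local Notation ectx := (ectx F arity).
Local Notation subterm := (subterm F).
Local Notation isub := (isub F).
Local Notation guarded := (guarded F).
Local Notation ok := (seq_ok F arity oplus RE).
Local Notation pR := (provR arity oplus RE).
Local Notation pL := (provL arity oplus RE).
Local Notation pS := (provS arity oplus RE).

Section TermInd.
Variable P : tm -> Prop.
Hypothesis HN : forall n, P (Name n).
Hypothesis HV : forall n, P (Var n).
Hypothesis HPub : forall a, P a -> P (Pub a).
Hypothesis HSign : forall a b, P a -> P b -> P (Sign a b).
Hypothesis HBlind : forall a b, P a -> P b -> P (Blind a b).
Hypothesis HPair : forall a b, P a -> P b -> P (Pair a b).
Hypothesis HEnc : forall a b, P a -> P b -> P (Enc a b).
Hypothesis HApp : forall f args, (forall a, In a args -> P a) -> P (App f args).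
Fixpoint tind (t : tm) : P t :=
  match t with
  | Name n => HN n | Var n => HV n
  | Pub a => HPub a (tind a)
  | Sign a b => HSign a b (tind a) (tind b)
  | Blind a b => HBlind a b (tind a) (tind b)
  | Pair a b => HPair a b (tind a) (tind b)
  | Enc a b => HEnc a b (tind a) (tind b)
  | App f args => HApp f args
      ((fix go (l : list tm) : forall a, In a l -> P a :=
          match l with
          | [] => fun a H => False_ind _ H
          | b :: l' => fun a H =>
              match H with
              | or_introl e => eq_ind b P (tind b) a e
              | or_intror H' => go l' a H'
              end
          end) args)
  end.
End TermInd.

Section PatInd.
Variable P : pat F -> Prop.
Hypothesis HV : forall n, P (PVar n).
Hypothesis HApp : forall f ps, (forall p, In p ps -> P p) -> P (PApp f ps).
Fixpoint pind (p : pat F) : P p :=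
  match p with
  | PVar n => HV n
  | PApp f ps => HApp f ps
      ((fix go (l : list (pat F)) : forall a, In a l -> P a :=
          match l with
          | [] => fun a H => False_ind _ H
          | b :: l' => fun a H =>
              match H with
              | or_introl e => eq_ind b P (pind b) a e
              | or_intror H' => go l' a H'
              end
          end) ps)
  end.
End PatInd.

Fixpoint size (t : tm) : nat :=
  match t with
  | Name _ | Var _ => 1
  | Pub a => S (size a)
  | Sign a b | Blind a b | Pair a b | Enc a b => S (size a + size b)
  | App f args => S (list_sum (map size args))
  end.

Lemma wf_isub a b : isub a b -> wf b -> wf a.
Proof. intros H Hw; destruct H; inversion Hw; subst; auto. Qed.

Lemma wf_subterm a b : subterm a b -> wf b -> wf a.
Proof. intros H; induction H; eauto using wf_isub. Qed.

Lemma wf_App_inv f l : wf (App f l) -> length l = arity f /\ forall a, In a l -> wf a.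
Proof. intros H; inversion H; subst; auto. Qed.

Lemma wf_App_repl f l1 l2 s t :
  wf (App f (l1 ++ s :: l2)) -> wf t -> wf (App f (l1 ++ t :: l2)).
Proof.
  intros Hw Ht; apply wf_App_inv in Hw; destruct Hw as [Hl Ha']. constructor.
  - rewrite !length_app in *; simpl in *; lia.
  - intros a Ha. apply in_app_or in Ha; destruct Ha as [Ha|[Ha|Ha]]; subst; auto;
    apply Ha'; apply in_or_app; simpl; auto.
Qed.

Lemma In_split_app {A} (a : A) l : In a l -> exists l1 l2, l = l1 ++ a :: l2.
Proof. apply in_split. Qed.

Lemma crst_map (R : tm -> tm -> Prop) (phi : tm -> tm) :
  (forall x y, R x y -> R (phi x) (phi y)) ->
  forall x y, clos_refl_sym_trans _ R x y -> clos_refl_sym_trans _ R (phi x) (phi y).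
Proof.
  intros H x y Hxy; induction Hxy.
  - apply rst_step; auto.
  - apply rst_refl.
  - apply rst_sym; auto.
  - eapply rst_trans; eauto.
Qed.

Lemma ac_refl x : ac x x.
Proof. apply rst_refl. Qed.
Lemma ac_sym x y : ac x y -> ac y x.
Proof. apply rst_sym. Qed.
Lemma ac_trans x y z : ac x y -> ac y z -> ac x z.
Proof. apply rst_trans. Qed.
Lemma ac_step x y : acstep x y -> ac x y.
Proof. apply rst_step. Qed.

Lemma ac_Pub a a' : ac a a' -> ac (Pub a) (Pub a').
Proof. apply (crst_map _ (fun z => Pub z)); intros; now apply cc_Pub. Qed.
Lemma ac_Sign a a' b b' : ac a a' -> ac b b' -> ac (Sign a b) (Sign a' b').
Proof.
  intros H1 H2; apply ac_trans with (Sign a' b).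
  - apply (crst_map _ (fun z => Sign z b)); auto; intros; now apply cc_Sign1.
  - apply (crst_map _ (fun z => Sign a' z)); auto; intros; now apply cc_Sign2.
Qed.
Lemma ac_Blind a a' b b' : ac a a' -> ac b b' -> ac (Blind a b) (Blind a' b').
Proof.
  intros H1 H2; apply ac_trans with (Blind a' b).
  - apply (crst_map _ (fun z => Blind z b)); auto; intros; now apply cc_Blind1.
  - apply (crst_map _ (fun z => Blind a' z)); auto; intros; now apply cc_Blind2.
Qed.
Lemma ac_Pair a a' b b' : ac a a' -> ac b b' -> ac (Pair a b) (Pair a' b').
Proof.
  intros H1 H2; apply ac_trans with (Pair a' b).
  - apply (crst_map _ (fun z => Pair z b)); auto; intros; now apply cc_Pair1.
  - apply (crst_map _ (fun z => Pair a' z)); auto; intros; now apply cc_Pair2.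
Qed.
Lemma ac_Enc a a' b b' : ac a a' -> ac b b' -> ac (Enc a b) (Enc a' b').
Proof.
  intros H1 H2; apply ac_trans with (Enc a' b).
  - apply (crst_map _ (fun z => Enc z b)); auto; intros; now apply cc_Enc1.
  - apply (crst_map _ (fun z => Enc a' z)); auto; intros; now apply cc_Enc2.
Qed.
Lemma ac_App1 f l1 l2 a a' : ac a a' -> ac (App f (l1 ++ a :: l2)) (App f (l1 ++ a' :: l2)).
Proof. apply (crst_map _ (fun z => App f (l1 ++ z :: l2))); intros; now apply cc_App. Qed.

Lemma ac_axiom_wf a b : ac_axiom F oplus a b -> (wf a <-> wf b).
Proof.
  intros H; destruct H as [f a b c Hf | f a b Hf]; pose proof (Hoplus f Hf) as Ha;
  split; intros Hw.
  - apply wf_App_inv in Hw; destruct Hw as [_ Hw].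
    assert (wf a) by (apply Hw; simpl; auto).
    assert (Hbc : wf (App f [b; c])) by (apply Hw; simpl; auto).
    apply wf_App_inv in Hbc; destruct Hbc as [_ Hbc].
    constructor; [simpl; auto|]. intros x [<-|[<-|[]]].
    + constructor; [simpl; auto|]. intros y [<-|[<-|[]]]; auto; apply Hbc; simpl; auto.
    + apply Hbc; simpl; auto.
  - apply wf_App_inv in Hw; destruct Hw as [_ Hw].
    assert (wf c) by (apply Hw; simpl; auto).
    assert (Hbc : wf (App f [a; b])) by (apply Hw; simpl; auto).
    apply wf_App_inv in Hbc; destruct Hbc as [_ Hbc].
    constructor; [simpl; auto|]. intros x [<-|[<-|[]]].
    + apply Hbc; simpl; auto.
    + constructor; [simpl; auto|]. intros y [<-|[<-|[]]]; auto; apply Hbc; simpl; auto.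
  - apply wf_App_inv in Hw; destruct Hw as [_ Hw].
    constructor; [simpl; auto|]. intros x [<-|[<-|[]]]; apply Hw; simpl; auto.
  - apply wf_App_inv in Hw; destruct Hw as [_ Hw].
    constructor; [simpl; auto|]. intros x [<-|[<-|[]]]; apply Hw; simpl; auto.
Qed.

Lemma wf_App_repl' f l1 l2 s :
  wf (App f (l1 ++ s :: l2)) -> wf s.
Proof. intros H; apply wf_App_inv in H; apply H; apply in_or_app; simpl; auto. Qed.

Lemma cc_wf (r : tm -> tm -> Prop) :
  (forall a b, r a b -> (wf a <-> wf b)) ->
  forall s t, ctx_closure F r s t -> (wf s <-> wf t).
Proof.
  intros Hr s t H; induction H; auto;
  try (split; intros Hw; inversion Hw; subst; constructor; try tauto; fail).
  split; intros Hw.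
  - eapply wf_App_repl; eauto. apply IHctx_closure; eapply wf_App_repl'; eauto.
  - eapply wf_App_repl; eauto. apply IHctx_closure; eapply wf_App_repl'; eauto.
Qed.

Lemma acstep_wf a b : acstep a b -> (wf a <-> wf b).
Proof. apply cc_wf, ac_axiom_wf. Qed.

Lemma ac_wf a b : ac a b -> (wf a <-> wf b).
Proof.
  intros H; induction H.
  - now apply acstep_wf.
  - tauto.
  - tauto.
  - tauto.
Qed.

Inductive same_top : tm -> tm -> Prop :=
| st_Name n : same_top (Name n) (Name n)
| st_Var n : same_top (Var n) (Var n)
| st_Pub a a' : ac a a' -> same_top (Pub a) (Pub a')
| st_Sign a b a' b' : ac a a' -> ac b b' -> same_top (Sign a b) (Sign a' b')
| st_Blind a b a' b' : ac a a' -> ac b b' -> same_top (Blind a b) (Blind a' b')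
| st_Pair a b a' b' : ac a a' -> ac b b' -> same_top (Pair a b) (Pair a' b')
| st_Enc a b a' b' : ac a a' -> ac b b' -> same_top (Enc a b) (Enc a' b')
| st_App f g l l' : same_top (App f l) (App g l').

Lemma same_top_refl x : same_top x x.
Proof. destruct x; constructor; apply ac_refl. Qed.
Lemma same_top_sym x y : same_top x y -> same_top y x.
Proof. intros H; destruct H; constructor; apply ac_sym; auto. Qed.
Lemma same_top_trans x y z : same_top x y -> same_top y z -> same_top x z.
Proof.
  intros H1 H2; destruct H1; inversion H2; subst; constructor; eapply ac_trans; eauto.
Qed.
Lemma acstep_same_top x y : acstep x y -> same_top x y.
Proof.
  intros H; destruct H; try (constructor; auto using ac_refl, ac_step; fail).
  destruct H; constructor.
Qed.
Lemma ac_same_top x y : ac x y -> same_top x y.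
Proof.
  intros H; induction H.
  - now apply acstep_same_top.
  - apply same_top_refl.
  - now apply same_top_sym.
  - eapply same_top_trans; eauto.
Qed.

Lemma ac_guarded x y : ac x y -> guarded x -> guarded y.
Proof. intros H; apply ac_same_top in H; destruct H; simpl; auto. Qed.

Lemma ac_Name n y : ac (Name n) y -> y = Name n.
Proof. intros H; apply ac_same_top in H; inversion H; auto. Qed.

Lemma ac_size_ax x y : ac_axiom F oplus x y -> size x = size y.
Proof. intros H; destruct H; simpl; lia. Qed.

Lemma list_sum_app l1 l2 : list_sum (l1 ++ l2) = list_sum l1 + list_sum l2.
Proof. induction l1; simpl; lia. Qed.

Lemma acstep_size x y : acstep x y -> size x = size y.
Proof.
  intros H; induction H; simpl; try lia.
  - now apply ac_size_ax.
  - rewrite !map_app, !list_sum_app; simpl; lia.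
Qed.
Lemma ac_size x y : ac x y -> size x = size y.
Proof. intros H; induction H; try lia. now apply acstep_size. Qed.
Lemma subterm_refl x : subterm x x.
Proof. apply rt_refl. Qed.
Lemma subterm_trans x y z : subterm x y -> subterm y z -> subterm x z.
Proof. apply rt_trans. Qed.
Lemma subterm_isub x y : isub x y -> subterm x y.
Proof. apply rt_step. Qed.
Lemma subterm_inv g x : subterm g x -> g = x \/ exists c, isub c x /\ subterm g c.
Proof.
  intros H; apply clos_rt_rtn1 in H; destruct H as [|y z Hyz H]; auto.
  right; exists y; split; auto. now apply clos_rtn1_rt.
Qed.
Lemma subterm_isub_trans g c x : subterm g c -> isub c x -> subterm g x.
Proof. intros; eapply subterm_trans; eauto using subterm_isub. Qed.

Lemma isub_App_split c f l : isub c (App f l) -> exists l1 l2, l = l1 ++ c :: l2.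
Proof. intros H; inversion H; subst; now apply in_split. Qed.

Lemma In_app_mid {A} (a : A) l1 l2 : In a (l1 ++ a :: l2).
Proof. apply in_or_app; simpl; auto. Qed.

Lemma cc_flip (r : tm -> tm -> Prop) x y :
  ctx_closure F r x y -> ctx_closure F (fun a b => r b a) y x.
Proof.
  intros H; induction H;
  [ now apply cc_top | now apply cc_Pub | now apply cc_Sign1 | now apply cc_Sign2
  | now apply cc_Blind1 | now apply cc_Blind2 | now apply cc_Pair1 | now apply cc_Pair2
  | now apply cc_Enc1 | now apply cc_Enc2 | now apply cc_App ].
Qed.

Lemma cc_transfer (r : tm -> tm -> Prop) :
  (forall x y, ctx_closure F r x y -> ac x y) ->
  (forall x y, r x y -> forall g, guarded g -> subterm g x -> subterm g y) ->
  forall x y, ctx_closure F r x y ->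
  forall g, guarded g -> subterm g x -> exists g', subterm g' y /\ ac g g'.
Proof.
  intros Hac Htop x y H; induction H; intros g Hg Hs.
  1: exists g; split; [eapply Htop; eauto | apply ac_refl].
  all: apply subterm_inv in Hs; destruct Hs as [->|[c [Hc Hs]]];
      [ eexists; split; [apply subterm_refl| apply Hac;
          first [ now apply cc_Pub | now apply cc_Sign1 | now apply cc_Sign2
          | now apply cc_Blind1 | now apply cc_Blind2 | now apply cc_Pair1 | now apply cc_Pair2
          | now apply cc_Enc1 | now apply cc_Enc2 | now apply cc_App ]] | ].
  all: try (inversion Hc; subst;
      first [ destruct (IHctx_closure g Hg Hs) as [g' [H1 H2]]; exists g'; split; auto;
              eapply subterm_isub_trans; eauto; constructor
            | exists g; split; [eapply subterm_isub_trans; eauto; constructor|apply ac_refl] ]; fail).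
  inversion Hc; subst.
  match goal with Hin : In c _ |- _ => apply in_app_or in Hin; destruct Hin as [Hin|[<-|Hin]] end.
  + exists g; split; [|apply ac_refl]. eapply subterm_isub_trans; eauto.
    constructor; apply in_or_app; auto.
  + destruct (IHctx_closure g Hg Hs) as [g' [H1 H2]]; exists g'; split; auto.
    eapply subterm_isub_trans; eauto. constructor; apply In_app_mid.
  + exists g; split; [|apply ac_refl]. eapply subterm_isub_trans; eauto.
    constructor; apply in_or_app; simpl; auto.
Qed.

Lemma sub_of_App_guarded g f l : guarded g -> subterm g (App f l) ->
  exists c, In c l /\ subterm g c.
Proof.
  intros Hg Hs; apply subterm_inv in Hs; destruct Hs as [->|[c [Hc Hs]]].
  - destruct Hg.
  - inversion Hc; subst; eauto.
Qed.

Lemma isub_App_in a f l : In a l -> subterm a (App f l).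
Proof. intros; apply subterm_isub; now constructor. Qed.

Lemma ax_top_fwd x y : ac_axiom F oplus x y ->
  forall g, guarded g -> subterm g x -> subterm g y.
Proof.
  intros H g Hg Hs; destruct H as [f a b c Hf| f a b Hf].
  - apply sub_of_App_guarded in Hs; auto; destruct Hs as [d [Hd Hs]].
    destruct Hd as [<-|[<-|[]]].
    + eapply subterm_trans; [exact Hs|]. apply subterm_trans with (App f [a; b]);
      apply isub_App_in; simpl; auto.
    + apply sub_of_App_guarded in Hs; auto; destruct Hs as [e [He Hs]].
      destruct He as [<-|[<-|[]]].
      * eapply subterm_trans; [exact Hs|]. apply subterm_trans with (App f [a; b]);
        apply isub_App_in; simpl; auto.
      * eapply subterm_trans; [exact Hs|]. apply isub_App_in; simpl; auto.
  - apply sub_of_App_guarded in Hs; auto; destruct Hs as [d [Hd Hs]].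
    eapply subterm_trans; [exact Hs|]. apply isub_App_in; simpl.
    destruct Hd as [<-|[<-|[]]]; auto.
Qed.

Lemma ax_top_bwd x y : ac_axiom F oplus y x ->
  forall g, guarded g -> subterm g x -> subterm g y.
Proof.
  intros H g Hg Hs; destruct H as [f a b c Hf| f a b Hf].
  - apply sub_of_App_guarded in Hs; auto; destruct Hs as [d [Hd Hs]].
    destruct Hd as [<-|[<-|[]]].
    + apply sub_of_App_guarded in Hs; auto; destruct Hs as [e [He Hs]].
      destruct He as [<-|[<-|[]]].
      * eapply subterm_trans; [exact Hs|]. apply isub_App_in; simpl; auto.
      * eapply subterm_trans; [exact Hs|]. apply subterm_trans with (App f [b; c]);
        apply isub_App_in; simpl; auto.
    + eapply subterm_trans; [exact Hs|]. apply subterm_trans with (App f [b; c]);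
      apply isub_App_in; simpl; auto.
  - apply sub_of_App_guarded in Hs; auto; destruct Hs as [d [Hd Hs]].
    eapply subterm_trans; [exact Hs|]. apply isub_App_in; simpl.
    destruct Hd as [<-|[<-|[]]]; auto.
Qed.

Lemma ac_transfer x y : ac x y ->
  (forall g, guarded g -> subterm g x -> exists g', subterm g' y /\ ac g g') /\
  (forall g, guarded g -> subterm g y -> exists g', subterm g' x /\ ac g g').
Proof.
  intros H; induction H as [x y H| x | x y H [IH1 IH2] | x y z H1 [IH1 IH2] H2 [IH3 IH4]].
  - split.
    + apply (cc_transfer (ac_axiom F oplus)); auto.
      * intros; now apply ac_step.
      * apply ax_top_fwd.
    + apply (cc_transfer (fun a b => ac_axiom F oplus b a)); auto.
      * intros a b Hab; apply cc_flip in Hab; apply ac_sym, ac_step; exact Hab.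
      * apply ax_top_bwd.
      * now apply cc_flip.
  - split; intros g _ Hs; exists g; split; auto using ac_refl.
  - split; auto.
  - split.
    + intros g Hg Hs. destruct (IH1 g Hg Hs) as [g1 [Hs1 Ha1]].
      destruct (IH3 g1 (ac_guarded _ _ Ha1 Hg) Hs1) as [g2 [Hs2 Ha2]].
      exists g2; split; eauto using ac_trans.
    + intros g Hg Hs. destruct (IH4 g Hg Hs) as [g1 [Hs1 Ha1]].
      destruct (IH2 g1 (ac_guarded _ _ Ha1 Hg) Hs1) as [g2 [Hs2 Ha2]].
      exists g2; split; eauto using ac_trans.
Qed.

Lemma normal_ac s t : ac s t -> wf s -> normal s -> normal t.
Proof.
  intros Hst Hs Hn u [Ht [Hu [t' [u' [H1 [H2 H3]]]]]].
  apply (Hn u); split; auto; split; auto. exists t', u'; split; eauto using ac_trans.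
Qed.

Lemma rstep_ctx (phi : tm -> tm) :
  (forall x y, rstep x y -> rstep (phi x) (phi y)) ->
  (forall x y, ac x y -> ac (phi x) (phi y)) ->
  (forall x, wf (phi x) -> wf x) ->
  (forall x y, wf (phi x) -> wf y -> wf (phi y)) ->
  forall a, wf (phi a) -> normal (phi a) -> normal a.
Proof.
  intros H1 H2 H3 H4 a Hw Hn u [Ha [Hu [a' [u' [Ha' [Hr Hu']]]]]].
  apply (Hn (phi u)); split; auto; split; [eapply H4; eauto|].
  exists (phi a'), (phi u'); auto.
Qed.

Lemma normal_isub a b : isub a b -> wf b -> normal b -> normal a.
Proof.
  intros H; destruct H.
  - apply (rstep_ctx (fun z => Pub z)).
    + intros; now apply cc_Pub.
    + intros; now apply ac_Pub.
    + intros x Hx; now inversion Hx.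
    + intros x y Hx Hy; inversion Hx; constructor; auto.
  - apply (rstep_ctx (fun z => Sign z t)).
    + intros; now apply cc_Sign1.
    + intros; apply ac_Sign; auto using ac_refl.
    + intros x Hx; now inversion Hx.
    + intros x y Hx Hy; inversion Hx; constructor; auto.
  - apply (rstep_ctx (fun z => Sign s z)).
    + intros; now apply cc_Sign2.
    + intros; apply ac_Sign; auto using ac_refl.
    + intros x Hx; now inversion Hx.
    + intros x y Hx Hy; inversion Hx; constructor; auto.
  - apply (rstep_ctx (fun z => Blind z t)).
    + intros; now apply cc_Blind1.
    + intros; apply ac_Blind; auto using ac_refl.
    + intros x Hx; now inversion Hx.
    + intros x y Hx Hy; inversion Hx; constructor; auto.
  - apply (rstep_ctx (fun z => Blind s z)).
    + intros; now apply cc_Blind2.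
    + intros; apply ac_Blind; auto using ac_refl.
    + intros x Hx; now inversion Hx.
    + intros x y Hx Hy; inversion Hx; constructor; auto.
  - apply (rstep_ctx (fun z => Pair z t)).
    + intros; now apply cc_Pair1.
    + intros; apply ac_Pair; auto using ac_refl.
    + intros x Hx; now inversion Hx.
    + intros x y Hx Hy; inversion Hx; constructor; auto.
  - apply (rstep_ctx (fun z => Pair s z)).
    + intros; now apply cc_Pair2.
    + intros; apply ac_Pair; auto using ac_refl.
    + intros x Hx; now inversion Hx.
    + intros x y Hx Hy; inversion Hx; constructor; auto.
  - apply (rstep_ctx (fun z => Enc z t)).
    + intros; now apply cc_Enc1.
    + intros; apply ac_Enc; auto using ac_refl.
    + intros x Hx; now inversion Hx.
    + intros x y Hx Hy; inversion Hx; constructor; auto.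
  - apply (rstep_ctx (fun z => Enc s z)).
    + intros; now apply cc_Enc2.
    + intros; apply ac_Enc; auto using ac_refl.
    + intros x Hx; now inversion Hx.
    + intros x y Hx Hy; inversion Hx; constructor; auto.
  - apply in_split in H; destruct H as [l1 [l2 ->]].
    apply (rstep_ctx (fun z => App f (l1 ++ z :: l2))).
    + intros; now apply cc_App.
    + intros; now apply ac_App1.
    + intros x Hx; eapply wf_App_repl'; eauto.
    + intros x y Hx Hy; eapply wf_App_repl; eauto.
Qed.

Lemma normal_subterm a b : subterm a b -> wf b -> normal b -> normal a.
Proof.
  intros H; induction H; auto.
  - intros; eapply normal_isub; eauto.
  - intros Hw Hn; apply IHclos_refl_trans1; auto. eapply wf_subterm; eauto.
Qed.
Lemma eqE_refl x : eqE x x.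
Proof. apply rst_refl. Qed.
Lemma eqE_sym x y : eqE x y -> eqE y x.
Proof. apply rst_sym. Qed.
Lemma eqE_trans x y z : eqE x y -> eqE y z -> eqE x z.
Proof. apply rst_trans. Qed.

Lemma eqE_wf a b : eqE a b -> (wf a -> wf b) /\ (wf b -> wf a).
Proof.
  intros H; induction H as [x y [H1 [H2 _]]| | |]; tauto.
Qed.

Lemma ac_eqE x y : ac x y -> wf x -> eqE x y.
Proof.
  intros H; induction H as [x y H| x | x y H IH | x y z H1 IH1 H2 IH2]; intros Hw.
  - apply rst_step; split; auto; split; [now apply (acstep_wf x y)|]; auto.
  - apply eqE_refl.
  - apply eqE_sym, IH. now apply (ac_wf x y).
  - eapply eqE_trans; [apply IH1; auto| apply IH2]. now apply (ac_wf x y).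
Qed.

Lemma rAC_eqE x y : rAC x y -> eqE x y.
Proof.
  intros [Hx [Hy [x' [y' [H1 [H2 H3]]]]]].
  assert (wf x') by (now apply (ac_wf x x')).
  assert (wf y') by (now apply (ac_wf y' y)).
  eapply eqE_trans; [apply ac_eqE; eauto|].
  apply eqE_trans with y'; [apply rst_step; split; auto|]. apply ac_eqE; auto.
Qed.

Lemma eqE_App1 f l1 l2 a b : eqE a b -> wf (App f (l1 ++ a :: l2)) ->
  eqE (App f (l1 ++ a :: l2)) (App f (l1 ++ b :: l2)).
Proof.
  intros H; revert l1 l2; induction H as [x y [H1 [H2 H3]]| x | x y H IH | x y z H1 IH1 H2 IH2];
  intros l1 l2 Hw.
  - apply rst_step. split; auto. split; [eapply wf_App_repl; eauto|].
    destruct H3; [left; now apply cc_App| right; now apply cc_App].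
  - apply eqE_refl.
  - apply eqE_sym, IH. eapply wf_App_repl; eauto.
    apply (eqE_wf x y H). eapply wf_App_repl'; eauto.
  - eapply eqE_trans; [apply IH1; auto| apply IH2].
    eapply wf_App_repl; eauto. apply (eqE_wf x y H1). eapply wf_App_repl'; eauto.
Qed.

Lemma eqE_App_list f l l' : Forall2 eqE l l' -> wf (App f l) -> eqE (App f l) (App f l').
Proof.
  intros H; assert (Hgen : forall l0, wf (App f (l0 ++ l)) -> eqE (App f (l0 ++ l)) (App f (l0 ++ l'))).
  { induction H as [|a b l l' Hab Hl IH]; intros l0 Hw; [apply eqE_refl|].
    eapply eqE_trans; [apply eqE_App1; eauto|].
    replace (l0 ++ b :: l) with ((l0 ++ [b]) ++ l) by (rewrite <- app_assoc; reflexivity).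
    replace (l0 ++ b :: l') with ((l0 ++ [b]) ++ l') by (rewrite <- app_assoc; reflexivity).
    apply IH. rewrite <- app_assoc; simpl. eapply wf_App_repl; eauto.
    apply (eqE_wf a b Hab). eapply wf_App_repl'; eauto. }
  intros Hw; apply (Hgen []); auto.
Qed.

Lemma list_choice {A B} (Q : A -> B -> Prop) (l : list A) :
  (forall a, In a l -> exists b, Q a b) -> exists l', Forall2 Q l l'.
Proof.
  induction l as [|a l IH]; intros H.
  - exists []; constructor.
  - destruct (H a (or_introl eq_refl)) as [b Hb].
    destruct IH as [l' Hl']; [intros; apply H; simpl; auto|].
    exists (b :: l'); constructor; auto.
Qed.

Lemma Forall2_length {A B} (Q : A -> B -> Prop) l l' : Forall2 Q l l' -> length l = length l'.
Proof. intros H; induction H; simpl; auto. Qed.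

Lemma Forall2_In_r {A B} (Q : A -> B -> Prop) l l' b : Forall2 Q l l' -> In b l' -> exists a, In a l /\ Q a b.
Proof.
  intros H; induction H; simpl; [tauto|]. intros [<-|Hb]; eauto.
  destruct (IHForall2 Hb) as [a [Ha Hq]]; eauto.
Qed.

Lemma ectx_wf G C : ectx G C -> (forall x, In x G -> wf x) -> wf C.
Proof.
  intros H HG; induction H; auto. constructor; auto.
Qed.

Lemma ectx_subst D G C : ectx D C ->
  (forall x, In x D -> wf x) -> (forall x, In x G -> wf x) ->
  (forall x, In x D -> exists C', ectx G C' /\ eqE x C') ->
  exists C', ectx G C' /\ eqE C C'.
Proof.
  intros H HD HG Hx; induction H as [t Ht| f args Hlen Hargs IH].
  - auto.
  - destruct (list_choice (fun a b => ectx G b /\ eqE a b) args IH) as [args' Hl].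
    exists (App f args'); split.
    + apply ectx_App.
      * rewrite (Forall2_length _ _ _ Hl) in Hlen; auto.
      * intros b Hb; destruct (Forall2_In_r _ _ _ _ Hl Hb) as [a [_ [Hb' _]]]; auto.
    + apply eqE_App_list.
      * eapply Forall2_impl; [|exact Hl]. simpl; tauto.
      * apply (ectx_wf D); auto. apply ectx_App; auto.
Qed.

Lemma ok_isub G T a : ok G T -> isub a T -> ok G a.
Proof.
  intros [H1 [H2 H3]] Ha; split; auto; split; [eapply wf_isub; eauto| eapply normal_isub; eauto].
Qed.

Lemma ok_sub G T a : ok G T -> subterm a T -> ok G a.
Proof.
  intros [H1 [H2 H3]] Ha; split; auto; split; [eapply wf_subterm; eauto| eapply normal_subterm; eauto].
Qed.

Lemma pR_ok G T : pR G T -> ok G T.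
Proof. intros H; destruct H; auto. Qed.

Lemma pR_subst D G T : pR D T -> ok G T ->
  (forall x, In x D -> exists C', ectx G C' /\ eqE x C') -> pR G T.
Proof.
  intros H; induction H as [D M Hok [C [HC HE]] | D M N Hok H1 IH1 H2 IH2
     | D M N Hok H1 IH1 H2 IH2 | D M N Hok H1 IH1 H2 IH2 | D M N Hok H1 IH1 H2 IH2];
  intros HG Hx.
  - destruct (ectx_subst D G C HC) as [C' [HC' HE']]; auto.
    + intros x Hx'; apply Hok; auto.
    + intros x Hx'; apply HG; auto.
    + apply R_id; auto. exists C'; split; auto. eapply eqE_trans; eauto.
  - apply R_pR; auto; [apply IH1|apply IH2]; auto; eapply ok_isub; eauto; constructor.
  - apply R_eR; auto; [apply IH1|apply IH2]; auto; eapply ok_isub; eauto; constructor.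
  - apply R_signR; auto; [apply IH1|apply IH2]; auto; eapply ok_isub; eauto; constructor.
  - apply R_blindR; auto; [apply IH1|apply IH2]; auto; eapply ok_isub; eauto; constructor.
Qed.

Lemma hole_in G x : In x G -> exists C', ectx G C' /\ eqE x C'.
Proof. intros; exists x; split; [now constructor| apply eqE_refl]. Qed.

Lemma pR_weak G G' T : pR G T -> incl G G' -> (forall x, In x G' -> wf x /\ normal x) -> pR G' T.
Proof.
  intros H Hi Hw; eapply pR_subst; eauto.
  - apply pR_ok in H; destruct H as [_ H]; split; auto.
  - intros x Hx; apply hole_in; auto.
Qed.

Lemma pR_ac G K K' : pR G K -> ac K K' -> ok G K' -> pR G K'.
Proof.
  intros H; revert K'; induction H as [G M Hok [C [HC HE]] | G M N Hok H1 IH1 H2 IH2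
     | G M N Hok H1 IH1 H2 IH2 | G M N Hok H1 IH1 H2 IH2 | G M N Hok H1 IH1 H2 IH2];
  intros K' Hac HK'.
  - apply R_id; auto. exists C; split; auto. eapply eqE_trans; [|exact HE].
    apply ac_eqE; [now apply ac_sym| apply HK'].
  - apply ac_same_top in Hac; inversion Hac; subst.
    apply R_pR; auto; [apply IH1|apply IH2]; auto; eapply ok_isub; eauto; constructor.
  - apply ac_same_top in Hac; inversion Hac; subst.
    apply R_eR; auto; [apply IH1|apply IH2]; auto; eapply ok_isub; eauto; constructor.
  - apply ac_same_top in Hac; inversion Hac; subst.
    apply R_signR; auto; [apply IH1|apply IH2]; auto; eapply ok_isub; eauto; constructor.
  - apply ac_same_top in Hac; inversion Hac; subst.
    apply R_blindR; auto; [apply IH1|apply IH2]; auto; eapply ok_isub; eauto; constructor.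
Qed.

Lemma pR_ectx G T : pR G T -> exists C, ectx G C.
Proof. intros H; induction H; auto. destruct H0 as [C [HC _]]; eauto. Qed.
Local Notation rt := (clos_refl_trans tm rAC).

Lemma rt_wf a b : rt a b -> wf a -> wf b.
Proof. intros H; induction H; auto. destruct H as [_ [H _]]; auto. Qed.

Lemma rAC_ac_l a b c : ac a b -> wf a -> rAC b c -> rAC a c.
Proof.
  intros Hab Ha [Hb [Hc [b' [c' [H1 [H2 H3]]]]]].
  split; auto; split; auto; exists b', c'; split; eauto using ac_trans.
Qed.

Lemma coh a b c : rt b c -> ac a b -> wf a -> exists c', rt a c' /\ ac c' c.
Proof.
  intros H; apply clos_rt_rt1n in H; destruct H as [|b1 c0 Hb Hr]; intros Hab Ha.
  - exists a; split; auto using rt_refl.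
  - exists c0; split; auto using ac_refl.
    apply rt_trans with b1; [apply rt_step; eapply rAC_ac_l; eauto| now apply clos_rt1n_rt].
Qed.

Definition J s t := exists u1 u2, rt s u1 /\ rt t u2 /\ ac u1 u2.

Lemma J_sym s t : J s t -> J t s.
Proof. intros [u1 [u2 [H1 [H2 H3]]]]; exists u2, u1; auto using ac_sym. Qed.

Lemma J_trans s t v : J s t -> J t v -> wf s -> wf t -> wf v -> J s v.
Proof.
  intros [u1 [u2 [H1 [H2 H3]]]] [v1 [v2 [H4 [H5 H6]]]] Hs Ht Hv.
  destruct (Hconf t u2 v1 Ht H2 H4) as [w1 [w2 [H7 [H8 H9]]]].
  destruct (coh u1 u2 w1 H7 H3 (rt_wf _ _ H1 Hs)) as [w1' [H10 H11]].
  destruct (coh v2 v1 w2 H8 (ac_sym _ _ H6) (rt_wf _ _ H5 Hv)) as [w2' [H12 H13]].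
  exists w1', w2'; split; [eapply rt_trans; eauto|]; split; [eapply rt_trans; eauto|].
  eapply ac_trans; [exact H11|]. eapply ac_trans; [exact H9|]. now apply ac_sym.
Qed.

Lemma estep_J s t : estep F arity oplus RE s t -> J s t.
Proof.
  intros [Hs [Ht [Hr|Ha]]].
  - exists t, t; split; [apply rt_step|split; [apply rt_refl| apply ac_refl]].
    split; auto; split; auto; exists s, t; split; auto using ac_refl.
  - exists s, t; split; [apply rt_refl|split; [apply rt_refl| now apply ac_step]].
Qed.

Lemma eqE_J s t : eqE s t -> wf s -> J s t.
Proof.
  intros H; apply clos_rst_rst1n in H; induction H as [x| x y z Hxy H IH]; intros Hx.
  - exists x, x; split; auto using rt_refl; split; auto using rt_refl, ac_refl.
  - assert (Hy : wf y) by (destruct Hxy as [[_ [Hy _]]|[Hy _]]; auto).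
    assert (Hz : wf z) by (apply (eqE_wf y z); auto; now apply clos_rst1n_rst).
    apply J_trans with y; auto.
    destruct Hxy; [now apply estep_J| now apply J_sym, estep_J].
Qed.

Lemma rt_normal s u : rt s u -> normal s -> u = s.
Proof.
  intros H; apply clos_rt_rt1n in H; destruct H as [|b c Hb Hr]; auto.
  intros Hn; exfalso; exact (Hn b Hb).
Qed.

Lemma CR_nf s t : eqE s t -> wf s -> normal s -> exists u, rt t u /\ ac s u.
Proof.
  intros H Hs Hn; destruct (eqE_J s t H Hs) as [u1 [u2 [H1 [H2 H3]]]].
  apply rt_normal in H1; auto; subst; eauto.
Qed.

Lemma CR_nf2 s t : eqE s t -> wf s -> normal s -> normal t -> ac s t.
Proof.
  intros H Hs Hn Ht; destruct (CR_nf s t H Hs Hn) as [u [H1 H2]].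
  apply rt_normal in H1; auto; subst; auto.
Qed.
Inductive pvar : nat -> pat F -> Prop :=
| pv_Var x : pvar x (PVar x)
| pv_App x f ps p : In p ps -> pvar x p -> pvar x (PApp f ps).

Lemma inst_ext (s1 s2 : nat -> tm) p : (forall z, pvar z p -> s1 z = s2 z) -> inst F s1 p = inst F s2 p.
Proof.
  induction p as [n| f ps IH] using pind; intros H; simpl.
  - apply H; constructor.
  - f_equal. apply map_ext_in; intros p Hp. apply IH; auto. intros z Hz; apply H; econstructor; eauto.
Qed.

Lemma inst_sub (s : nat -> tm) p z : pvar z p -> subterm (s z) (inst F s p).
Proof.
  intros H; induction H; simpl; [apply subterm_refl|].
  eapply subterm_trans; [exact IHpvar|]. apply isub_App_in. now apply in_map.
Qed.

Lemma wf_inst_var (s : nat -> tm) p z : wf (inst F s p) -> pvar z p -> wf (s z).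
Proof. intros; eapply wf_subterm; eauto using inst_sub. Qed.

Lemma wf_inst (s : nat -> tm) p : wf_pat arity p -> (forall z, pvar z p -> wf (s z)) -> wf (inst F s p).
Proof.
  induction p as [n| f ps IH] using pind; intros Hp H; simpl.
  - apply H; constructor.
  - inversion Hp; subst. constructor; [now rewrite length_map|].
    intros a Ha; apply in_map_iff in Ha; destruct Ha as [p [<- Hp']].
    apply IH; auto. intros z Hz; apply H; econstructor; eauto.
Qed.

Lemma replace_sub (r : tm -> tm -> Prop) s0 t0 : r s0 t0 -> wf t0 ->
  forall x, subterm s0 x -> exists x', ctx_closure F r x x' /\ subterm t0 x' /\ (wf x -> wf x').
Proof.
  intros Hr Ht x Hs; apply clos_rt_rtn1 in Hs; induction Hs as [|y z Hyz Hs IH].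
  - exists t0; split; [now apply cc_top|split; auto using subterm_refl].
  - destruct IH as [y' [H1 [H2 H3]]].
    destruct Hyz.
    + exists (Pub y'); split; [now apply cc_Pub|split; [eapply subterm_isub_trans; eauto; constructor|]].
      intros Hw; inversion Hw; constructor; auto.
    + exists (Sign y' t); split; [now apply cc_Sign1|split; [eapply subterm_isub_trans; eauto; constructor|]].
      intros Hw; inversion Hw; constructor; auto.
    + exists (Sign s y'); split; [now apply cc_Sign2|split; [eapply subterm_isub_trans; eauto; constructor|]].
      intros Hw; inversion Hw; constructor; auto.
    + exists (Blind y' t); split; [now apply cc_Blind1|split; [eapply subterm_isub_trans; eauto; constructor|]].
      intros Hw; inversion Hw; constructor; auto.
    + exists (Blind s y'); split; [now apply cc_Blind2|split; [eapply subterm_isub_trans; eauto; constructor|]].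
      intros Hw; inversion Hw; constructor; auto.
    + exists (Pair y' t); split; [now apply cc_Pair1|split; [eapply subterm_isub_trans; eauto; constructor|]].
      intros Hw; inversion Hw; constructor; auto.
    + exists (Pair s y'); split; [now apply cc_Pair2|split; [eapply subterm_isub_trans; eauto; constructor|]].
      intros Hw; inversion Hw; constructor; auto.
    + exists (Enc y' t); split; [now apply cc_Enc1|split; [eapply subterm_isub_trans; eauto; constructor|]].
      intros Hw; inversion Hw; constructor; auto.
    + exists (Enc s y'); split; [now apply cc_Enc2|split; [eapply subterm_isub_trans; eauto; constructor|]].
      intros Hw; inversion Hw; constructor; auto.
    + apply in_split in H; destruct H as [l1 [l2 ->]].
      exists (App f (l1 ++ y' :: l2)); split; [now apply cc_App|split].
      * eapply subterm_trans; [exact H2|]. apply isub_App_in, In_app_mid.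
      * intros Hw. eapply wf_App_repl; eauto. apply H3. eapply wf_App_repl'; eauto.
Qed.

Lemma var_cond l r (s : nat -> tm) : In (l, r) RE -> wf (inst F s l) -> wf (inst F s r) ->
  forall y, pvar y r -> pvar y l.
Proof.
  intros Hin Hl Hr y Hy. destruct (classic (pvar y l)) as [|Hn]; auto. exfalso.
  set (s0 := inst F s l).
  set (s' := fun z => if Nat.eqb z y then s0 else s z).
  assert (E : inst F s' l = s0).
  { unfold s0; apply inst_ext; intros z Hz; unfold s'.
    destruct (Nat.eqb_spec z y); subst; auto; contradiction. }
  set (t0 := inst F s' r).
  assert (Hw0 : wf t0).
  { apply wf_inst; [apply (Hrules l r Hin)|]. intros z Hz; unfold s'.
    destruct (Nat.eqb_spec z y); [exact Hl| eapply wf_inst_var; eauto]. }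
  assert (Hsub : subterm s0 t0).
  { replace s0 with (s' y) by (unfold s'; now rewrite Nat.eqb_refl). apply inst_sub; auto. }
  assert (Hrt : rule_top F RE s0 t0).
  { rewrite <- E. unfold t0. now apply rt_inst. }
  assert (Hstep : forall x, wf x -> subterm s0 x -> exists x', rAC x x' /\ wf x' /\ subterm s0 x').
  { intros x Hx Hsx. destruct (replace_sub _ s0 t0 Hrt Hw0 x Hsx) as [x' [H1 [H2 H3]]].
    assert (wf x') by auto.
    exists x'; split; [|split; [auto| apply subterm_trans with t0; auto]].
    split; [exact Hx|]; split; [assumption|]. exists x, x'; split; [apply ac_refl|split; [exact H1|apply ac_refl]]. }
  assert (Hacc : forall x, Acc (fun u v => rAC v u) x -> wf x -> subterm s0 x -> False).
  { intros x Ha; induction Ha as [x _ IH]; intros Hx Hsx.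
    destruct (Hstep x Hx Hsx) as [x' [H1 [H2 H3]]]; exact (IH x' H1 H2 H3). }
  apply (Hacc s0); [apply Hterm| |apply subterm_refl]; unfold s0; auto.
Qed.
Inductive alP (P : tm -> Prop) : tm -> Prop :=
| alP_g t : guarded t -> P t -> alP P t
| alP_App f args : (forall a, In a args -> alP P a) -> alP P (App f args).

Lemma alP_mono (P Q : tm -> Prop) t : (forall g, P g -> Q g) -> alP P t -> alP Q t.
Proof. intros H Ht; induction Ht; [apply alP_g; auto| apply alP_App; auto]. Qed.

Lemma alP_App_inv P f l : alP P (App f l) -> forall a, In a l -> alP P a.
Proof. intros H; inversion H; subst; [contradiction|auto]. Qed.

Lemma alP_guarded P t : guarded t -> (alP P t <-> P t).
Proof.
  intros Hg; split; intros H; [inversion H; subst; auto; contradiction| apply alP_g; auto].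
Qed.

Lemma alP_ginv P t : alP P t -> guarded t -> P t.
Proof. intros H Hg; now apply (alP_guarded P t Hg). Qed.

Definition ac_closed (P : tm -> Prop) := forall a b, P a -> ac a b -> P b.

Ltac cc_solve := first [ apply cc_Pub; eassumption | apply cc_Sign1; eassumption | apply cc_Sign2; eassumption
          | apply cc_Blind1; eassumption | apply cc_Blind2; eassumption | apply cc_Pair1; eassumption
          | apply cc_Pair2; eassumption
          | apply cc_Enc1; eassumption | apply cc_Enc2; eassumption ].

Lemma alP_acstep P : ac_closed P -> forall x y, acstep x y -> (alP P x <-> alP P y).
Proof.
  intros HP x y H; induction H.
  { destruct H as [f a b c Hf| f a b Hf]; split; intros Hal; apply alP_App; intros d Hd.
    + destruct Hd as [<-|[<-|[]]].
      * apply alP_App; intros e [<-|[<-|[]]]; [apply (alP_App_inv _ _ _ Hal); simpl; auto|].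
        apply (alP_App_inv _ _ _ (alP_App_inv _ _ _ Hal (App f [b; c]) (or_intror (or_introl eq_refl)))); simpl; auto.
      * apply (alP_App_inv _ _ _ (alP_App_inv _ _ _ Hal (App f [b; c]) (or_intror (or_introl eq_refl)))); simpl; auto.
    + destruct Hd as [<-|[<-|[]]].
      * apply (alP_App_inv _ _ _ (alP_App_inv _ _ _ Hal (App f [a; b]) (or_introl eq_refl))); simpl; auto.
      * apply alP_App; intros e [<-|[<-|[]]]; [|apply (alP_App_inv _ _ _ Hal); simpl; auto].
        apply (alP_App_inv _ _ _ (alP_App_inv _ _ _ Hal (App f [a; b]) (or_introl eq_refl))); simpl; auto.
    + apply (alP_App_inv _ _ _ Hal); simpl; destruct Hd as [<-|[<-|[]]]; auto.
    + apply (alP_App_inv _ _ _ Hal); simpl; destruct Hd as [<-|[<-|[]]]; auto. }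
  all: try (match goal with |- alP _ ?X <-> alP _ ?Y =>
              assert (Hc : acstep X Y) by cc_solve; rewrite (alP_guarded _ X I), (alP_guarded _ Y I);
              split; intros Hp; eapply HP; try exact Hp;
              first [apply ac_step; exact Hc| apply ac_sym, ac_step; exact Hc] end).
    split; intros Hal; apply alP_App; intros d Hd; apply in_app_or in Hd;
      destruct Hd as [Hd|[<-|Hd]];
      try (apply (alP_App_inv _ _ _ Hal); apply in_or_app; simpl; auto; fail);
      apply IHctx_closure; apply (alP_App_inv _ _ _ Hal); apply In_app_mid.
Qed.

Lemma alP_ac_iff P : ac_closed P -> forall x y, ac x y -> (alP P x <-> alP P y).
Proof.
  intros HP x y H; induction H as [x y H| x | x y H IH | x y z H1 IH1 H2 IH2].
  - now apply (alP_acstep P HP x y H).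
  - tauto.
  - tauto.
  - tauto.
Qed.

Lemma alP_ac P : ac_closed P -> forall x y, ac x y -> alP P x -> alP P y.
Proof. intros HP x y H; now apply (alP_ac_iff P HP x y H). Qed.

Lemma alP_inst_var P (s : nat -> tm) p z : alP P (inst F s p) -> pvar z p -> alP P (s z).
Proof.
  intros H Hz; induction Hz; simpl in H; auto.
  apply IHHz. apply (alP_App_inv _ _ _ H). now apply in_map.
Qed.

Lemma alP_inst P (s : nat -> tm) p : (forall z, pvar z p -> alP P (s z)) -> alP P (inst F s p).
Proof.
  induction p as [n| f ps IH] using pind; intros H; simpl.
  - apply H; constructor.
  - apply alP_App; intros a Ha; apply in_map_iff in Ha; destruct Ha as [q [<- Hq]].
    apply IH; auto; intros z Hz; apply H; econstructor; eauto.
Qed.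

Definition nw (g : tm) := normal g /\ wf g.

Lemma alP_rstep P : (forall g, P g -> nw g) ->
  forall x y, rstep x y -> wf x -> wf y -> alP P x -> alP P y.
Proof.
  intros HP x y H; induction H as [x y H| | | | | | | | | | f l1 l2 s t H IH]; intros Hx Hy Hal.
  { destruct H as [l r s Hin]. apply alP_inst. intros z Hz.
    eapply alP_inst_var; [exact Hal|]. eapply var_cond; eauto. }
  all: try (exfalso; apply alP_ginv in Hal; [|exact I]; apply HP in Hal; destruct Hal as [Hn _];
      eapply Hn; split; [exact Hx|]; split; [exact Hy|]; do 2 eexists; split; [apply ac_refl|];
      split; [cc_solve|apply ac_refl]).
    apply alP_App; intros a Ha; apply in_app_or in Ha; destruct Ha as [Ha|[<-|Ha]];
      try (apply (alP_App_inv _ _ _ Hal); apply in_or_app; simpl; auto; fail).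
    apply IH; [eapply wf_App_repl'; eauto| eapply wf_App_repl'; eauto|].
    apply (alP_App_inv _ _ _ Hal); apply In_app_mid.
Qed.

Lemma alP_rAC P : (forall g, P g -> nw g) -> ac_closed P ->
  forall x y, rAC x y -> alP P x -> alP P y.
Proof.
  intros HP HPa x y [Hx [Hy [x' [y' [H1 [H2 H3]]]]]] Hal.
  assert (wf x') by (now apply (ac_wf x x')).
  assert (wf y') by (now apply (ac_wf y' y)).
  eapply alP_ac; [exact HPa|exact H3|]. eapply alP_rstep; eauto. eapply alP_ac; eauto.
Qed.

Lemma alP_rt P : (forall g, P g -> nw g) -> ac_closed P ->
  forall x y, clos_refl_trans tm rAC x y -> alP P x -> alP P y.
Proof. intros HP HPa x y H; induction H; eauto using alP_rAC. Qed.

Lemma alP_nf t : normal t -> wf t -> alP nw t.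
Proof.
  induction t as [| | | | | | | f args IH] using tind; intros Hn Hw;
  try (apply alP_g; [exact I| split; auto]).
  apply alP_App; intros a Ha; apply IH; auto.
  - eapply normal_isub; eauto; now constructor.
  - eapply wf_isub; eauto; now constructor.
Qed.

Lemma alP_sub s : forall t, subterm t s -> alP (fun h => subterm h s) t.
Proof.
  intros t; induction t as [| | | | | | | f args IH] using tind; intros Hs;
  try (apply alP_g; [exact I| exact Hs]).
  apply alP_App; intros a Ha; apply IH; auto. eapply subterm_trans; [|exact Hs].
  now apply isub_App_in.
Qed.

Lemma nw_ac : ac_closed nw.
Proof.
  intros a b [Hn Hw] Hab; split; [eapply normal_ac; eauto| now apply (ac_wf a b)].
Qed.
Lemma alien_lemma G g C : guarded g -> nw g -> eqE g C -> ectx G C ->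
  (forall x, In x G -> nw x) ->
  exists gam h, In gam G /\ subterm h gam /\ ac g h.
Proof.
  intros Hg [Hn Hw] HE HC HG.
  set (P := fun h => exists gam h', In gam G /\ subterm h' gam /\ ac h h').
  assert (HPa : ac_closed P).
  { intros a b [gam [h' [H1 [H2 H3]]]] Hab; exists gam, h'; split; auto; split; auto.
    eapply ac_trans; [apply ac_sym; exact Hab| exact H3]. }
  assert (HPn : forall h, P h -> nw h).
  { intros h [gam [h' [H1 [H2 H3]]]].
    destruct (HG gam H1) as [Hn1 Hw1].
    assert (nw h') by (split; [eapply normal_subterm; eauto| eapply wf_subterm; eauto]).
    eapply nw_ac; eauto. now apply ac_sym. }
  assert (HalC : alP P C).
  { clear HE; induction HC as [t Ht| f args Hlen Hargs IH].
    - eapply alP_mono; [|apply (alP_sub t t); apply subterm_refl].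
      intros h Hh; exists t, h; split; auto; split; auto using ac_refl.
    - apply alP_App; auto. }
  destruct (CR_nf g C HE Hw Hn) as [w [Hrt Hgw]].
  assert (Hal : alP P w) by (eapply alP_rt; eauto).
  apply alP_ginv in Hal; [|eapply ac_guarded; eauto].
  destruct Hal as [gam [h' [H1 [H2 H3]]]]; exists gam, h'; split; auto; split; auto.
  eapply ac_trans; eauto.
Qed.
Definition Afree (A t : tm) := forall g, subterm g t -> ~ ac g A.

Section Repl.
Variable A u : tm.
Hypothesis HAg : guarded A.
Hypothesis HAn : nw A.
Hypothesis Hu : wf u.

Fixpoint th (t : tm) : tm :=
  if excluded_middle_informative (ac t A) then u else
  match t with
  | Pub a => Pub (th a)
  | Sign a b => Sign (th a) (th b)
  | Blind a b => Blind (th a) (th b)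
  | Pair a b => Pair (th a) (th b)
  | Enc a b => Enc (th a) (th b)
  | App f args => App f (map th args)
  | _ => t
  end.

Lemma th_A t : ac t A -> th t = u.
Proof. intros H; destruct t; simpl; destruct (excluded_middle_informative _); tauto. Qed.

Lemma th_nA t : ~ ac t A -> th t =
  match t with
  | Pub a => Pub (th a)
  | Sign a b => Sign (th a) (th b)
  | Blind a b => Blind (th a) (th b)
  | Pair a b => Pair (th a) (th b)
  | Enc a b => Enc (th a) (th b)
  | App f args => App f (map th args)
  | _ => t
  end.
Proof. intros H; destruct t; simpl; destruct (excluded_middle_informative _); tauto. Qed.

Lemma App_nA f l : ~ ac (App f l) A.
Proof. intros H. apply ac_sym in H. apply (ac_guarded _ _ H HAg). Qed.

Lemma th_App f l : th (App f l) = App f (map th l).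
Proof. rewrite th_nA; auto using App_nA. Qed.

Lemma th_inst (s : nat -> tm) p : th (inst F s p) = inst F (fun z => th (s z)) p.
Proof.
  induction p as [n| f ps IH] using pind; [reflexivity|].
  cbn [inst]. rewrite th_App, map_map. f_equal. apply map_ext_in; auto.
Qed.

Lemma acstep_A x y : acstep x y -> (ac x A <-> ac y A).
Proof.
  intros H; split; intros H'.
  - eapply ac_trans; [apply ac_sym, ac_step; exact H| exact H'].
  - eapply ac_trans; [apply ac_step; exact H| exact H'].
Qed.

Lemma th_acstep x y : acstep x y -> ac (th x) (th y).
Proof.
  intros H; induction H;
  (match goal with |- ac (th ?X) (th ?Y) =>
     destruct (classic (ac X A)) as [HA|HA];
     [ rewrite (th_A X HA), (th_A Y); [apply ac_refl|];
       eapply ac_trans; [apply ac_sym, ac_step|exact HA];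
       first [apply cc_top; assumption | cc_solve | apply cc_App; assumption]
     | assert (HB : ~ ac Y A) by (intros HB; apply HA; eapply ac_trans; [apply ac_step|exact HB];
          first [apply cc_top; assumption | cc_solve | apply cc_App; assumption]);
       rewrite (th_nA _ HA), (th_nA _ HB); cbv beta iota ] end).
  - destruct H as [f a b c Hf| f a b Hf]; cbn [map]; repeat rewrite th_App; cbn [map];
      apply ac_step, cc_top.
    + now apply ac_assoc.
    + now apply ac_comm.
  - now apply ac_Pub.
  - apply ac_Sign; auto using ac_refl.
  - apply ac_Sign; auto using ac_refl.
  - apply ac_Blind; auto using ac_refl.
  - apply ac_Blind; auto using ac_refl.
  - apply ac_Pair; auto using ac_refl.
  - apply ac_Pair; auto using ac_refl.
  - apply ac_Enc; auto using ac_refl.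
  - apply ac_Enc; auto using ac_refl.
  - rewrite !map_app; cbn [map]. now apply ac_App1.
Qed.

Lemma th_ac x y : ac x y -> ac (th x) (th y).
Proof.
  intros H; induction H; [now apply th_acstep| apply ac_refl| now apply ac_sym| eapply ac_trans; eauto].
Qed.

Lemma nw_rstep_false x y : nw x -> rstep x y -> wf y -> False.
Proof.
  intros [Hn Hw] Hr Hy. apply (Hn y). split; auto; split; auto.
  exists x, y; split; auto using ac_refl.
Qed.

Lemma th_rstep x y : rstep x y -> wf x -> wf y -> alP nw x -> rstep (th x) (th y).
Proof.
  intros H; induction H as [x y H| | | | | | | | | | f l1 l2 s t H IH]; intros Hx Hy Hal.
  { destruct (classic (ac x A)) as [HA|HA].
    - exfalso. apply alP_ginv in Hal; [|eapply ac_guarded; [apply ac_sym; exact HA| exact HAg]].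
      eapply nw_rstep_false; eauto. now apply cc_top.
    - destruct H as [l r s Hin]. rewrite !th_inst. apply cc_top. now constructor. }
  all: try (exfalso; apply alP_ginv in Hal; [|exact I];
            eapply nw_rstep_false; [exact Hal| cc_solve| exact Hy]).
  rewrite !th_App, !map_app; cbn [map]. apply cc_App. apply IH.
  - eapply wf_App_repl'; eauto.
  - eapply wf_App_repl'; eauto.
  - apply (alP_App_inv _ _ _ Hal). apply In_app_mid.
Qed.

Lemma th_wf t : wf t -> wf (th t).
Proof.
  induction t as [| | | | | | | f args IH] using tind; intros Hw;
  (match goal with |- wf (th ?X) => destruct (classic (ac X A)) as [HA|HA] end;
   [rewrite th_A; auto|rewrite th_nA; auto]);
  inversion Hw; subst; try constructor; auto.
  - now rewrite length_map.
  - intros a Ha; apply in_map_iff in Ha; destruct Ha as [b [<- Hb]]; auto.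
Qed.

Lemma Afree_isub t a : Afree A t -> isub a t -> Afree A a.
Proof. intros H Ha g Hg; apply H; eapply subterm_isub_trans; eauto. Qed.

Lemma th_id t : Afree A t -> th t = t.
Proof.
  induction t as [| | | | | | | f args IH] using tind; intros Hf;
  (rewrite th_nA; [|apply Hf, subterm_refl]); auto;
  try (f_equal; first [apply IH | apply IHt | apply IHt1 | apply IHt2]; eapply Afree_isub; eauto; constructor; fail).
  f_equal. rewrite <- (map_id args) at 2. apply map_ext_in. intros a Ha; apply IH; auto.
  eapply Afree_isub; eauto; now constructor.
Qed.

Lemma th_ectx G C : ectx (A :: G) C -> (forall g, In g G -> Afree A g) -> ectx G u ->
  ectx G (th C).
Proof.
  intros H HG Hu'; induction H as [t Ht| f args Hlen Hargs IH].
  - destruct Ht as [<-|Ht].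
    + rewrite th_A; auto using ac_refl.
    + rewrite th_id; auto. now apply ectx_hole.
  - rewrite th_App. apply ectx_App; [now rewrite length_map|].
    intros a Ha; apply in_map_iff in Ha; destruct Ha as [b [<- Hb]]; auto.
Qed.

Lemma th_rAC x y : rAC x y -> alP nw x -> eqE (th x) (th y).
Proof.
  intros [Hx [Hy [x' [y' [H1 [H2 H3]]]]]] Hal.
  assert (wf x') by (now apply (ac_wf x x')).
  assert (wf y') by (now apply (ac_wf y' y)).
  assert (alP nw x') by (eapply alP_ac; eauto using nw_ac).
  apply eqE_trans with (th x'); [apply ac_eqE; [now apply th_ac| now apply th_wf]|].
  apply eqE_trans with (th y'); [|apply ac_eqE; [now apply th_ac| now apply th_wf]].
  apply rst_step; split; [now apply th_wf|]; split; [now apply th_wf|]. left.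
  now apply th_rstep.
Qed.

Lemma th_rt x y : clos_refl_trans tm rAC x y -> alP nw x -> eqE (th x) (th y).
Proof.
  intros H; induction H as [x y H| x | x y z H1 IH1 H2 IH2]; intros Hal.
  - now apply th_rAC.
  - apply eqE_refl.
  - eapply eqE_trans; [apply IH1; auto| apply IH2].
    eapply alP_rt; eauto using nw_ac.
Qed.

End Repl.
Lemma nw_alP_ectx G C : ectx G C -> (forall g, In g G -> nw g) -> alP nw C.
Proof.
  intros H HG; induction H.
  - destruct (HG t H); now apply alP_nf.
  - now apply alP_App.
Qed.

Lemma abstraction A u G T C : guarded A -> nw A ->
  (forall g, In g G -> nw g /\ Afree A g) -> nw T -> Afree A T ->
  ectx (A :: G) C -> eqE T C -> ectx G u -> exists C', ectx G C' /\ eqE T C'.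
Proof.
  intros HAg HAn HG [HTn HTw] HTf HC HE Hu.
  assert (Hwu : wf u) by (eapply ectx_wf; eauto; intros x Hx; apply HG; auto).
  exists (th A u C); split.
  - apply th_ectx; auto. intros g Hg; apply HG; auto.
  - destruct (CR_nf T C HE HTw HTn) as [w [Hrt Hac]].
    assert (HalC : alP nw C).
    { eapply nw_alP_ectx; eauto. intros g [<-|Hg]; auto. apply HG; auto. }
    assert (H1 : eqE (th A u C) (th A u w)) by (eapply th_rt; eauto).
    assert (H2 : ac T (th A u w)).
    { assert (E : th A u T = T) by (eapply th_id; eauto). rewrite <- E at 1. eapply th_ac; eauto. }
    eapply eqE_trans; [apply ac_eqE; [exact H2| exact HTw]|]. now apply eqE_sym.
Qed.

Definition idform G A := exists C0, ectx G C0 /\ eqE A C0.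

Lemma RC_id G A K : idform G A -> pR (A :: G) K -> ok G K -> pR G K.
Proof.
  intros HA H Hok. eapply pR_subst; eauto.
  intros x [<-|Hx]; auto. apply hole_in; auto.
Qed.

Lemma not_idform_guarded G A : pR G A -> ~ idform G A -> guarded A.
Proof. intros H Hn; destruct H; simpl; auto. contradiction. Qed.

Lemma RC_R G A K : pR G A -> pR (A :: G) K -> ok G K ->
  (forall g, In g G -> Afree A g) -> Afree A K -> pR G K.
Proof.
  intros HA H Hok HGf HKf.
  destruct (classic (idform G A)) as [Hid|Hnid]; [eapply RC_id; eauto|].
  assert (HAg : guarded A) by (eapply not_idform_guarded; eauto).
  pose proof (pR_ok _ _ HA) as [HGok [HAw HAn]].
  destruct (pR_ectx _ _ HA) as [u Hu].
  remember (A :: G) as D eqn:HD.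
  induction H as [D M Hok' [C [HC HE]] | D M N Hok' H1 IH1 H2 IH2
     | D M N Hok' H1 IH1 H2 IH2 | D M N Hok' H1 IH1 H2 IH2 | D M N Hok' H1 IH1 H2 IH2]; subst.
  - destruct (abstraction A u G M C HAg (conj HAn HAw)) as [C' [HC' HE']]; auto.
    + intros g Hg; split; [split; apply HGok; auto| auto].
    + destruct Hok as [_ [? ?]]; split; auto.
    + apply R_id; auto. exists C'; auto.
  - apply R_pR; auto; [apply IH1|apply IH2]; auto;
      first [eapply ok_isub; eauto; constructor| eapply Afree_isub; eauto; constructor].
  - apply R_eR; auto; [apply IH1|apply IH2]; auto;
      first [eapply ok_isub; eauto; constructor| eapply Afree_isub; eauto; constructor].
  - apply R_signR; auto; [apply IH1|apply IH2]; auto;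
      first [eapply ok_isub; eauto; constructor| eapply Afree_isub; eauto; constructor].
  - apply R_blindR; auto; [apply IH1|apply IH2]; auto;
      first [eapply ok_isub; eauto; constructor| eapply Afree_isub; eauto; constructor].
Qed.
Lemma pL_ok G T : pL G T -> ok G T.
Proof. intros H; destruct H; auto. Qed.

Lemma ok_ctx G T : ok G T -> forall x, In x G -> wf x /\ normal x.
Proof. intros [H _]; auto. Qed.

Lemma ok_cons_ctx x G T : ok (x :: G) T -> wf x /\ normal x.
Proof. intros [H _]; apply H; simpl; auto. Qed.

Lemma ok_change G G' T T' : ok G T -> ok G' T' -> ok G' T.
Proof. intros [_ [H1 H2]] [H3 _]; split; auto. Qed.

Lemma ok_new G G' T : ok G T -> (forall x, In x G' -> wf x /\ normal x) -> ok G' T.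
Proof. intros [_ [H1 H2]] H; split; auto. Qed.

Lemma ok_mk G T : (forall x, In x G -> wf x /\ normal x) -> wf T -> normal T -> ok G T.
Proof. intros; split; auto. Qed.

Lemma gsub_mono A G G' M : gsub F A G M -> incl G G' -> gsub F A G' M.
Proof.
  intros [Hg [u [Hu Hs]]] Hi; split; auto; exists u; split; auto.
  destruct Hu; auto.
Qed.


Lemma incl_cc (x : tm) G G' : incl G G' -> incl (x :: G) (x :: G').
Proof. intros H a [<-|Ha]; simpl; auto. Qed.

Lemma ctx_cons (x : tm) G : wf x /\ normal x -> (forall y, In y G -> wf y /\ normal y) ->
  forall y, In y (x :: G) -> wf y /\ normal y.
Proof. intros Hx HG y [<-|Hy]; auto. Qed.


Lemma pL_weak G T : pL G T -> forall G', incl G G' -> (forall x, In x G' -> wf x /\ normal x) -> pL G' T.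
Proof.
  intros H; induction H as [G M Hok HR | G M N T Hok Hin H IH | G M K N Hok Hin HK H IH
     | G M K L N Hok Hin1 Hin2 Hac H IH | G M K N Hok Hin HK H IH | G M R K N Hok Hin HR H IH
     | G A M Hok Hgs HA H IH]; intros G' Hi HG'.
  - apply L_r; [eapply ok_new; eauto|]. eapply pR_weak; eauto.
  - pose proof (pL_ok _ _ H) as Hok2.
    eapply L_lp with (M := M) (N := N); [eapply ok_new; eauto| apply Hi; auto|].
    apply IH; [do 2 apply incl_cc; auto|].
    apply ctx_cons; [apply (ok_cons_ctx _ _ _ Hok2)|].
    apply ctx_cons; auto. apply (ok_cons_ctx N G T). split; [|apply Hok2].
    intros x Hx; apply Hok2; simpl; auto.
  - pose proof (pL_ok _ _ H) as Hok2.
    eapply L_le with (M := M) (K := K); [eapply ok_new; eauto| apply Hi; auto| eapply pR_weak; eauto|].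
    apply IH; [do 2 apply incl_cc; auto|].
    apply ctx_cons; [apply (ok_cons_ctx _ _ _ Hok2)|].
    apply ctx_cons; auto. apply (ok_cons_ctx K G N). split; [|apply Hok2].
    intros x Hx; apply Hok2; simpl; auto.
  - pose proof (pL_ok _ _ H) as Hok2.
    eapply L_sign with (M := M) (K := K) (L := L); [eapply ok_new; eauto| apply Hi; auto| apply Hi; auto| auto|].
    apply IH; [apply incl_cc; auto|].
    apply ctx_cons; [apply (ok_cons_ctx _ _ _ Hok2)|]. auto.
  - pose proof (pL_ok _ _ H) as Hok2.
    eapply L_blind1 with (M := M) (K := K); [eapply ok_new; eauto| apply Hi; auto| eapply pR_weak; eauto|].
    apply IH; [do 2 apply incl_cc; auto|].
    apply ctx_cons; [apply (ok_cons_ctx _ _ _ Hok2)|].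
    apply ctx_cons; auto. apply (ok_cons_ctx K G N). split; [|apply Hok2].
    intros x Hx; apply Hok2; simpl; auto.
  - pose proof (pL_ok _ _ H) as Hok2.
    eapply L_blind2 with (M := M) (R := R) (K := K); [eapply ok_new; eauto| apply Hi; auto| eapply pR_weak; eauto|].
    apply IH; [do 2 apply incl_cc; auto|].
    apply ctx_cons; [apply (ok_cons_ctx _ _ _ Hok2)|].
    apply ctx_cons; auto. apply (ok_cons_ctx R G N). split; [|apply Hok2].
    intros x Hx; apply Hok2; simpl; auto.
  - pose proof (pL_ok _ _ H) as Hok2.
    eapply L_ls with (A := A); [eapply ok_new; eauto| eapply gsub_mono; eauto| eapply pR_weak; eauto|].
    apply IH; [apply incl_cc; auto|].
    apply ctx_cons; [apply (ok_cons_ctx _ _ _ Hok2)|]. auto.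
Qed.
Definition ctxok (G : list tm) := forall x, In x G -> wf x /\ normal x.

Lemma push G N T2 : pL G N -> ok G T2 ->
  (forall G', incl G G' -> ctxok G' -> pR G' N -> pL G' T2) ->
  (forall A G', gsub F A G' N -> gsub F A G' T2) ->
  pL G T2.
Proof.
  intros H; revert T2; induction H as [G M Hok HR | G M N T Hok Hin H IH | G M K N Hok Hin HK H IH
     | G M K L N Hok Hin1 Hin2 Hac H IH | G M K N Hok Hin HK H IH | G M R K N Hok Hin HR H IH
     | G A M Hok Hgs HA H IH]; intros T2 Hok2 Hf Hg.
  - apply Hf; auto using incl_refl. intros x Hx; apply Hok2; auto.
  - pose proof (pL_ok _ _ H) as Hok3.
    eapply L_lp with (M := M) (N := N); eauto. apply IH; auto.
    + eapply ok_new; eauto. apply Hok3.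
    + intros G' Hi; apply Hf. intros a Ha; apply Hi; simpl; auto.
  - pose proof (pL_ok _ _ H) as Hok3.
    eapply L_le with (M := M) (K := K); eauto. apply IH; auto.
    + eapply ok_new; eauto. apply Hok3.
    + intros G' Hi; apply Hf. intros a Ha; apply Hi; simpl; auto.
  - pose proof (pL_ok _ _ H) as Hok3.
    eapply L_sign with (M := M) (K := K) (L := L); eauto. apply IH; auto.
    + eapply ok_new; eauto. apply Hok3.
    + intros G' Hi; apply Hf. intros a Ha; apply Hi; simpl; auto.
  - pose proof (pL_ok _ _ H) as Hok3.
    eapply L_blind1 with (M := M) (K := K); eauto. apply IH; auto.
    + eapply ok_new; eauto. apply Hok3.
    + intros G' Hi; apply Hf. intros a Ha; apply Hi; simpl; auto.
  - pose proof (pL_ok _ _ H) as Hok3.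
    eapply L_blind2 with (M := M) (R := R) (K := K); eauto. apply IH; auto.
    + eapply ok_new; eauto. apply Hok3.
    + intros G' Hi; apply Hf. intros a Ha; apply Hi; simpl; auto.
  - pose proof (pL_ok _ _ H) as Hok3.
    eapply L_ls with (A := A); eauto. apply IH; auto.
    + eapply ok_new; eauto. apply Hok3.
    + intros G' Hi; apply Hf. intros a Ha; apply Hi; simpl; auto.
Qed.

Lemma gsub_lift A G N T : gsub F A G N -> subterm N T -> gsub F A G T.
Proof.
  intros [Hg [v [[Hv|Hv] Hs]]] HN; split; auto.
  - exists v; auto.
  - subst v. exists T; split; auto. eapply subterm_trans; eauto.
Qed.

Lemma pL_right (c : tm -> tm -> tm) :
  (forall G M N, ok G (c M N) -> pR G M -> pR G N -> pR G (c M N)) ->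
  (forall M N, isub M (c M N)) -> (forall M N, isub N (c M N)) ->
  forall G M N, pL G M -> pL G N -> ok G (c M N) -> pL G (c M N).
Proof.
  intros Hc H1 H2 G M N HM HN Hok.
  apply (push G M); auto.
  - intros G' Hi HG' HRM. apply (push G' N).
    + eapply pL_weak; eauto.
    + eapply ok_new; eauto.
    + intros G'' Hi' HG'' HRN. apply L_r; [eapply ok_new; eauto|].
      apply Hc; [eapply ok_new; eauto| eapply pR_weak; eauto| auto].
    + intros A G0 Hs; eapply gsub_lift; eauto using subterm_isub.
  - intros A G0 Hs; eapply gsub_lift; eauto using subterm_isub.
Qed.
Definition acsim (D G : list tm) := forall x, In x D -> exists y, In y G /\ ac x y.

Lemma pR_acsim D G K : pR D K -> ok G K -> acsim D G -> pR G K.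
Proof.
  intros H Hok Hs. eapply pR_subst; eauto. intros x Hx.
  destruct (Hs x Hx) as [y [Hy Hxy]]. exists y; split; [now apply ectx_hole|].
  apply ac_eqE; auto. apply (pR_ok _ _ H); auto.
Qed.

Lemma pR_acsim' D G K T : pR D K -> acsim D G -> ok G T -> pR G K.
Proof.
  intros H Hs Hok; eapply pR_acsim; eauto. eapply ok_new; [apply (pR_ok _ _ H)|]. apply Hok.
Qed.

Lemma ok_sub_ctx G T a y : ok G T -> In y G -> subterm a y -> ok G a.
Proof.
  intros Hok Hy Ha. destruct (proj1 Hok y Hy) as [Hw Hn].
  split; [apply Hok|]; split; [eapply wf_subterm; eauto| eapply normal_subterm; eauto].
Qed.

Lemma acsim_cons x y D G : ac x y -> acsim D G -> acsim (x :: D) (y :: G).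
Proof.
  intros H Hs z [<-|Hz]; [exists y; simpl; auto|].
  destruct (Hs z Hz) as [w [Hw Hzw]]; exists w; simpl; auto.
Qed.

Lemma ctxok_cons G T x : ok G T -> wf x -> normal x -> ok (x :: G) T.
Proof. intros [H1 H2] Hw Hn; split; auto. intros z [<-|Hz]; auto. Qed.

Lemma ok_cons1 G T a : ok G T -> ok G a -> ok (a :: G) T.
Proof. intros H1 [_ [H2 H3]]; now apply ctxok_cons. Qed.
Lemma ok_cons2 G T a b : ok G T -> ok G a -> ok G b -> ok (a :: b :: G) T.
Proof. intros; now repeat apply ok_cons1. Qed.

Lemma isub_sub a b : isub a b -> subterm a b.
Proof. apply subterm_isub. Qed.

Lemma ACSim D T : pL D T -> forall G, acsim D G -> ok G T -> pL G T.
Proof.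
  intros H; induction H as [D M Hok HR | D M N T Hok Hin H IH | D M K N Hok Hin HK H IH
     | D M K L N Hok Hin1 Hin2 Hac H IH | D M K N Hok Hin HK H IH | D M R K N Hok Hin HR H IH
     | D A M Hok Hgs HA H IH]; intros G Hs HokG.
  - apply L_r; auto. eapply pR_acsim; eauto.
  - destruct (Hs _ Hin) as [y [Hy Hac]]. apply ac_same_top in Hac; inversion Hac; subst.
    apply L_lp with a' b'; auto. apply IH.
    + apply acsim_cons; auto; apply acsim_cons; auto.
    + assert (ok G a') by (eapply ok_sub_ctx; eauto; apply isub_sub; constructor).
      assert (ok G b') by (eapply ok_sub_ctx; eauto; apply isub_sub; constructor).
      now apply ok_cons2.
  - destruct (Hs _ Hin) as [y [Hy Hac]]. apply ac_same_top in Hac; inversion Hac; subst.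
    assert (ok G a') by (eapply ok_sub_ctx; eauto; apply isub_sub; constructor).
    assert (ok G b') by (eapply ok_sub_ctx; eauto; apply isub_sub; constructor).
    apply L_le with a' b'; auto.
    + eapply pR_ac; [eapply pR_acsim'; eauto|eauto|auto].
    + apply IH.
      * apply acsim_cons; auto; apply acsim_cons; auto.
      * now apply ok_cons2.
  - destruct (Hs _ Hin1) as [y [Hy Hac1]]. apply ac_same_top in Hac1; inversion Hac1; subst.
    destruct (Hs _ Hin2) as [z [Hz Hac2]]. apply ac_same_top in Hac2; inversion Hac2; subst.
    assert (ok G a') by (apply (ok_sub_ctx G N a' (Sign a' b')); auto; apply isub_sub; constructor).
    apply L_sign with a' b' a'0; auto.
    + apply ac_trans with K; [apply ac_sym; auto|]. apply ac_trans with L; auto.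
    + apply IH; [apply acsim_cons; auto|]. now apply ok_cons1.
  - destruct (Hs _ Hin) as [y [Hy Hac]]. apply ac_same_top in Hac; inversion Hac; subst.
    assert (ok G a') by (eapply ok_sub_ctx; eauto; apply isub_sub; constructor).
    assert (ok G b') by (eapply ok_sub_ctx; eauto; apply isub_sub; constructor).
    apply L_blind1 with a' b'; auto.
    + eapply pR_ac; [eapply pR_acsim'; eauto|eauto|auto].
    + apply IH.
      * apply acsim_cons; auto; apply acsim_cons; auto.
      * now apply ok_cons2.
  - destruct (Hs _ Hin) as [y [Hy Hac]]. apply ac_same_top in Hac; inversion Hac; subst.
    match goal with Hb : ac (Blind M R) ?B |- _ => rename Hb into HB end.
    apply ac_same_top in HB; inversion HB; subst.
    assert (Hs1 : subterm a'0 (Sign (Blind a'0 b'0) b')).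
    { apply subterm_trans with (Blind a'0 b'0); apply isub_sub; constructor. }
    assert (Hs2 : subterm b'0 (Sign (Blind a'0 b'0) b')).
    { apply subterm_trans with (Blind a'0 b'0); apply isub_sub; constructor. }
    assert (ok G a'0) by (eapply ok_sub_ctx; eauto).
    assert (ok G b'0) by (eapply ok_sub_ctx; eauto).
    assert (ok G b') by (eapply ok_sub_ctx; eauto; apply isub_sub; constructor).
    apply L_blind2 with a'0 b'0 b'; auto.
    + eapply pR_ac; [eapply pR_acsim'; eauto|eauto|auto].
    + apply IH.
      * apply acsim_cons; [apply ac_Sign; auto|]; apply acsim_cons; auto.
      * pose proof (pL_ok _ _ H) as Hok3. destruct (ok_cons_ctx _ _ _ Hok3) as [Hw3 Hn3].
        assert (Hac3 : ac (Sign M K) (Sign a'0 b')) by (apply ac_Sign; auto).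
        apply ok_cons2; auto. split; [apply HokG|]. split.
        -- now apply (ac_wf _ _ Hac3).
        -- eapply normal_ac; eauto.
  - destruct Hgs as [HAg [v [[Hv|Hv] Hsv]]].
    + destruct (Hs v Hv) as [y [Hy Hvy]].
      destruct (proj1 (ac_transfer v y Hvy) A HAg Hsv) as [A' [HA'y HAA']].
      assert (ok G A') by (eapply ok_sub_ctx; eauto).
      apply L_ls with A'; auto.
      * split; [eapply ac_guarded; eauto| exists y; auto].
      * eapply pR_ac; [eapply pR_acsim'; eauto|eauto|auto].
      * apply IH; [apply acsim_cons; auto| now apply ok_cons1].
    + subst v. assert (ok G A) by (eapply ok_sub; eauto).
      apply L_ls with A; auto.
      * split; auto. exists M; auto.
      * eapply pR_acsim; eauto.
      * apply IH; [apply acsim_cons; auto using ac_refl| now apply ok_cons1].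
Qed.
Definition inv (A : tm) (D G : list tm) := forall x, In x D -> x = A \/ exists y, In y G /\ ac x y.

Lemma inv_cons_ac A D G x y : ac x y -> inv A D G -> inv A (x :: D) (y :: G).
Proof.
  intros H Hi z [<-|Hz]; [right; exists y; simpl; auto|].
  destruct (Hi z Hz) as [?|[w [Hw Hzw]]]; auto. right; exists w; simpl; auto.
Qed.

Lemma inv_weak A D G G' : inv A D G -> incl G G' -> inv A D G'.
Proof.
  intros Hi Hg z Hz; destruct (Hi z Hz) as [?|[w [Hw Hzw]]]; auto. right; exists w; auto.
Qed.

Lemma inv_ext A D G x : inv A D G -> inv A (x :: D) (x :: G).
Proof. intros; apply inv_cons_ac; auto using ac_refl. Qed.

Lemma Afree_sub A a b : Afree A b -> subterm a b -> Afree A a.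
Proof. intros H Hs g Hg; apply H; eapply subterm_trans; eauto. Qed.

Lemma In_size a l : In a l -> size a <= list_sum (map size l).
Proof. induction l; simpl; [tauto|]. intros [ -> |H]; [lia|]. specialize (IHl H); lia. Qed.

Lemma isub_size a b : isub a b -> size a < size b.
Proof. intros H; destruct H; simpl; try lia. apply In_size in H; lia. Qed.

Lemma sub_size a b : subterm a b -> a = b \/ size a < size b.
Proof.
  intros H; apply clos_rt_rtn1 in H; induction H as [|y z Hyz H IH]; auto.
  right; apply isub_size in Hyz; destruct IH as [ -> |IH]; lia.
Qed.

Lemma Afree_small A a : size a < size A -> Afree A a.
Proof.
  intros H g Hg Hac. apply ac_size in Hac. destruct (sub_size _ _ Hg) as [ -> |Hs]; lia.
Qed.

Lemma ok_in G T y : ok G T -> In y G -> ok G y.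
Proof. intros Hok Hy; eapply ok_sub_ctx; eauto using subterm_refl. Qed.

Lemma ok_sub_ctxT G T a y : ok G T -> (In y G \/ y = T) -> subterm a y -> ok G a.
Proof. intros Hok [Hy|Hy] Ha; [eapply ok_sub_ctx; eauto| subst; eapply ok_sub; eauto]. Qed.

Lemma Finish A D G T g gam : pR G A -> guarded A -> (In gam G \/ gam = T) -> subterm g gam ->
  ac g A -> pL D T -> inv A D G -> ok G T -> pL G T.
Proof.
  intros HA HAg Hgam Hs Hac HD Hi Hok.
  assert (Hokg : ok G g) by (eapply ok_sub_ctxT; eauto).
  apply L_ls with g; auto.
  - split; [eapply ac_guarded; [apply ac_sym|]; eauto| exists gam; auto].
  - eapply pR_ac; eauto. now apply ac_sym.
  - eapply ACSim; eauto; [|now apply ok_cons1].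
    intros x Hx. destruct (Hi x Hx) as [Hx'|[y [Hy Hxy]]].
    + subst; exists g; split; simpl; auto. now apply ac_sym.
    + exists y; simpl; auto.
Qed.

Definition World A G T := idform G A \/ ((forall gam, In gam G -> Afree A gam) /\ Afree A T).

Lemma Fin_or_good A D G T : pR G A -> pL D T -> inv A D G -> ok G T ->
  pL G T \/ World A G T.
Proof.
  intros HA HD Hi Hok.
  destruct (classic (idform G A)) as [Hid|Hnid]; [right; now left|].
  assert (HAg : guarded A) by (eapply not_idform_guarded; eauto).
  destruct (classic (exists g gam, (In gam G \/ gam = T) /\ subterm g gam /\ ac g A))
    as [[g [gam [H1 [H2 H3]]]]|Hno].
  - left; eapply Finish; eauto.
  - right; right; split.
    + intros gam Hgam g Hg Hac; apply Hno; exists g, gam; auto.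
    + intros g Hg Hac; apply Hno; exists g, T; auto.
Qed.

Lemma Fin_or_right A D G T : pR G A -> guarded A -> pL D T -> inv A D G -> ok G T ->
  pL G T \/ (~ idform G A /\ (forall gam, In gam G -> Afree A gam) /\ Afree A T).
Proof.
  intros HA HAg HD Hi Hok.
  destruct (classic (idform G A)) as [Hid|Hnid].
  - left. destruct Hid as [C0 [HC0 HE0]].
    destruct (alien_lemma G A C0) as [gam [h [H1 [H2 H3]]]]; auto.
    + destruct (pR_ok _ _ HA) as [_ [? ?]]; split; auto.
    + intros x Hx; destruct (proj1 Hok x Hx); split; auto.
    + apply (Finish A D G T h gam); auto. now apply ac_sym.
  - destruct (Fin_or_good A D G T HA HD Hi Hok) as [?|[?|?]]; auto; contradiction.
Qed.

Lemma TR A D G K : pR D K -> inv A D G -> pR G A -> ok G K ->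
  (idform G A \/ ((forall gam, In gam G -> Afree A gam) /\ Afree A K)) -> pR G K.
Proof.
  intros HK Hi HA Hok HW.
  assert (HK' : pR (A :: G) K).
  { eapply pR_subst; eauto.
    - eapply ok_new; eauto. intros x [<-|Hx]; [destruct (pR_ok _ _ HA) as [_ [? ?]]; auto| apply Hok; auto].
    - intros x Hx. destruct (Hi x Hx) as [Hx'|[y [Hy Hxy]]]; [subst; apply hole_in; simpl; auto|].
      exists y; split; [apply ectx_hole; simpl; auto|]. apply ac_eqE; auto.
      apply (pR_ok _ _ HK); auto. }
  destruct HW as [Hid|[HG HKf]]; [eapply RC_id; eauto| eapply RC_R; eauto].
Qed.
Lemma SIDE A D G T K K' y : pR D K -> In y G -> ac K K' -> subterm K' y -> inv A D G ->
  pR G A -> ok G T -> World A G T -> pR G K'.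
Proof.
  intros HK Hy Hac Hs Hi HA Hok HW.
  assert (HokK' : ok G K') by (eapply ok_sub_ctx; eauto).
  assert (HK' : pR D K').
  { eapply pR_ac; eauto. eapply ok_new; [exact HokK'|]. apply (pR_ok _ _ HK). }
  eapply TR; eauto. destruct HW as [?|[HG _]]; [now left|right; split; auto].
  eapply Afree_sub; eauto.
Qed.

Lemma inv_consA A D G : inv A D G -> inv A (A :: D) G.
Proof. intros Hi x [<-|Hx]; auto. Qed.

Definition KL (A : tm) := forall G T, pR G A -> pL (A :: G) T -> ok G T -> pL G T.

Lemma ok_of_pR G K : pR G K -> ok G K.
Proof. apply pR_ok. Qed.

Lemma ok_from_ctx D G x T T' : ok (x :: D) T -> ok G T' -> ok G x.
Proof.
  intros H1 H2; destruct (ok_cons_ctx _ _ _ H1); split; auto; apply H2.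
Qed.

Lemma pR_weakc G x K : pR G K -> ok G x -> pR (x :: G) K.
Proof.
  intros H Hx; eapply pR_weak; eauto. intros a Ha; simpl; auto.
  intros z [<-|Hz]; [split; apply Hx| apply (pR_ok _ _ H); auto].
Qed.

Ltac okt := repeat apply ok_cons1; auto.

Lemma GenSim A (IHs : forall B, size B < size A -> KL B) :
  forall D T, pL D T -> forall G, inv A D G -> pR G A -> ok G T -> pL G T.
Proof.
  intros D T H; assert (HD := H); revert HD.
  induction H as [D M Hok HR | D M N T Hok Hin H IH | D M K N Hok Hin HK H IH
     | D M K L N Hok Hin1 Hin2 Hac H IH | D M K N Hok Hin HK H IH | D M R K N Hok Hin HR H IH
     | D A0 M Hok Hgs HA0 H IH]; intros HD G Hi HA HokG.
  -
    destruct (Fin_or_good A D G M HA HD Hi HokG) as [Hd|HW]; auto.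
    apply L_r; auto. eapply TR; eauto; destruct HW as [?|[? ?]]; auto.
  -
    pose proof (pL_ok _ _ H) as Hok3.
    destruct (Hi _ Hin) as [HeA|[y [Hy Hac]]].
    + subst A. destruct (Fin_or_right (Pair M N) D G T HA I HD Hi HokG) as [Hd|[Hnid [HGf HTf]]]; auto.
      inversion HA as [? ? ? Hid| ? ? ? ? HM HN | | |]; subst; [exfalso; now apply Hnid|].
      assert (HoM := ok_of_pR _ _ HM). assert (HoN := ok_of_pR _ _ HN).
      assert (H1 : pL (M :: N :: G) T).
      { apply IH; [exact H| | | ].
        - apply inv_ext, inv_ext; auto.
        - apply pR_weakc; [apply pR_weakc; auto| apply ok_cons1; auto].
        - apply ok_cons2; auto. }
      assert (H2 : pL (N :: G) T).
      { apply (IHs M); [simpl; lia| apply pR_weakc; auto| auto| apply ok_cons1; auto]. }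
      apply (IHs N); [simpl; lia| auto| auto| auto].
    + apply ac_same_top in Hac; inversion Hac; subst.
      assert (ok G a') by (eapply ok_sub_ctx; eauto; apply isub_sub; constructor).
      assert (ok G b') by (eapply ok_sub_ctx; eauto; apply isub_sub; constructor).
      apply L_lp with a' b'; auto. apply IH; [exact H| | | ].
      * apply inv_cons_ac; auto; apply inv_cons_ac; auto.
      * apply pR_weakc; [apply pR_weakc; auto| apply ok_cons1; auto].
      * apply ok_cons2; auto.
  -
    pose proof (pL_ok _ _ H) as Hok3.
    destruct (Hi _ Hin) as [HeA|[y [Hy Hac]]].
    + subst A. destruct (Fin_or_right (Enc M K) D G N HA I HD Hi HokG) as [Hd|[Hnid [HGf HTf]]]; auto.
      inversion HA as [? ? ? Hid| | ? ? ? ? HM HN | |]; subst; [exfalso; now apply Hnid|].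
      assert (HoM := ok_of_pR _ _ HM). assert (HoN := ok_of_pR _ _ HN).
      assert (H1 : pL (M :: K :: G) N).
      { apply IH; [exact H| | | ].
        - apply inv_ext, inv_ext; auto.
        - apply pR_weakc; [apply pR_weakc; auto| apply ok_cons1; auto].
        - apply ok_cons2; auto. }
      assert (H2 : pL (K :: G) N).
      { apply (IHs M); [simpl; lia| apply pR_weakc; auto| auto| apply ok_cons1; auto]. }
      apply (IHs K); [simpl; lia| auto| auto| auto].
    + apply ac_same_top in Hac; inversion Hac; subst.
      destruct (Fin_or_good A D G N HA HD Hi HokG) as [Hd|HW]; auto.
      assert (ok G a') by (eapply ok_sub_ctx; eauto; apply isub_sub; constructor).
      assert (ok G b') by (eapply ok_sub_ctx; eauto; apply isub_sub; constructor).
      apply L_le with a' b'; auto.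
      * eapply (SIDE A D G N K b' (Enc a' b')); eauto. apply isub_sub; constructor.
      * apply IH; [exact H| | | ].
        -- apply inv_cons_ac; auto; apply inv_cons_ac; auto.
        -- apply pR_weakc; [apply pR_weakc; auto| apply ok_cons1; auto].
        -- apply ok_cons2; auto.
  -
    pose proof (pL_ok _ _ H) as Hok3.
    destruct (Hi _ Hin2) as [HeA|[z [Hz Hac2]]].
    + subst A. destruct (Fin_or_right (Pub L) D G N HA I HD Hi HokG) as [Hd|[Hnid [HGf HTf]]]; auto.
      inversion HA as [? ? ? Hid| | | |]; subst. exfalso; now apply Hnid.
    + apply ac_same_top in Hac2; inversion Hac2; subst.
      destruct (Hi _ Hin1) as [HeA|[y [Hy Hac1]]].
      * subst A. destruct (Fin_or_right (Sign M K) D G N HA I HD Hi HokG) as [Hd|[Hnid [HGf HTf]]]; auto.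
        inversion HA as [? ? ? Hid| | | ? ? ? ? HM HN |]; subst; [exfalso; now apply Hnid|].
        assert (HoM := ok_of_pR _ _ HM).
        assert (Hq1 : pL (M :: G) N).
        { apply IH; [exact H| | | ].
          - apply inv_ext; auto.
          - apply pR_weakc; auto.
          - apply ok_cons1; auto. }
        apply (IHs M); [simpl; lia| auto| auto| auto].
      * apply ac_same_top in Hac1; inversion Hac1; subst.
        assert (ok G a'0) by (apply (ok_sub_ctx G N a'0 (Sign a'0 b')); auto; apply isub_sub; constructor).
        apply L_sign with a'0 b' a'; auto.
        -- apply ac_trans with K; [apply ac_sym; auto|]. apply ac_trans with L; auto.
        -- apply IH; [exact H| | | ].
           ++ apply inv_cons_ac; auto.
           ++ apply pR_weakc; auto.
           ++ apply ok_cons1; auto.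
  -
    pose proof (pL_ok _ _ H) as Hok3.
    destruct (Hi _ Hin) as [HeA|[y [Hy Hac]]].
    + subst A. destruct (Fin_or_right (Blind M K) D G N HA I HD Hi HokG) as [Hd|[Hnid [HGf HTf]]]; auto.
      inversion HA as [? ? ? Hid| | | | ? ? ? ? HM HN]; subst; [exfalso; now apply Hnid|].
      assert (HoM := ok_of_pR _ _ HM). assert (HoN := ok_of_pR _ _ HN).
      assert (H1 : pL (M :: K :: G) N).
      { apply IH; [exact H| | | ].
        - apply inv_ext, inv_ext; auto.
        - apply pR_weakc; [apply pR_weakc; auto| apply ok_cons1; auto].
        - apply ok_cons2; auto. }
      assert (H2 : pL (K :: G) N).
      { apply (IHs M); [simpl; lia| apply pR_weakc; auto| auto| apply ok_cons1; auto]. }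
      apply (IHs K); [simpl; lia| auto| auto| auto].
    + apply ac_same_top in Hac; inversion Hac; subst.
      destruct (Fin_or_good A D G N HA HD Hi HokG) as [Hd|HW]; auto.
      assert (ok G a') by (eapply ok_sub_ctx; eauto; apply isub_sub; constructor).
      assert (ok G b') by (eapply ok_sub_ctx; eauto; apply isub_sub; constructor).
      apply L_blind1 with a' b'; auto.
      * eapply (SIDE A D G N K b' (Blind a' b')); eauto. apply isub_sub; constructor.
      * apply IH; [exact H| | | ].
        -- apply inv_cons_ac; auto; apply inv_cons_ac; auto.
        -- apply pR_weakc; [apply pR_weakc; auto| apply ok_cons1; auto].
        -- apply ok_cons2; auto.
  -
    pose proof (pL_ok _ _ H) as Hok3.
    assert (HoS : forall G0 T0, ok G0 T0 -> ok G0 (Sign M K)).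
    { intros G0 T0 Ho; exact (ok_from_ctx _ _ _ _ _ Hok3 Ho). }
    destruct (Hi _ Hin) as [HeA|[y [Hy Hac]]].
    + subst A. destruct (Fin_or_right (Sign (Blind M R) K) D G N HA I HD Hi HokG)
        as [Hd|[Hnid [HGf HTf]]]; auto.
      inversion HA as [? ? ? Hid| | | ? ? ? ? HB HKK |]; subst; [exfalso; now apply Hnid|].
      assert (HoR : ok G R).
      { eapply ok_new; [apply (pR_ok _ _ HR)|]. apply HokG. }
      assert (HRG : pR G R).
      { eapply TR; eauto. right; split; auto. apply Afree_small; simpl; lia. }
      assert (HoSG : ok G (Sign M K)) by (eapply HoS; eauto).
      assert (Hq1 : pL (Sign M K :: R :: G) N).
      { apply IH; [exact H| | | ].
        - apply inv_ext, inv_ext; auto.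
        - apply pR_weakc; [apply pR_weakc; auto| apply ok_cons1; auto].
        - apply ok_cons2; auto. }
      assert (Hq2 : pL (Sign M K :: G) N).
      { apply (IHs R); [simpl; lia| apply pR_weakc; auto| |apply ok_cons1; auto].
        eapply pL_weak; [exact Hq1| |].
        - intros a [<-|[<-|Ha]]; simpl; auto.
        - intros a [<-|[<-|Ha]]; [apply HoR| apply HoSG| apply HokG; auto]. }
      inversion HB as [? ? ? Hid| | | | ? ? ? ? HM HR2]; subst.
      *
        destruct Hid as [C0 [HC0 HE0]].
        assert (HoB := ok_of_pR _ _ HB).
        destruct (alien_lemma G (Blind M R) C0) as [gam [h [Hg1 [Hg2 Hg3]]]]; auto.
        { exact I. }
        { split; apply HoB. }
        { intros x Hx; split; apply HokG; auto. }
        assert (Hoh : ok G h) by (eapply ok_sub_ctx; eauto).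
        assert (Hsth := ac_same_top _ _ Hg3). inversion Hsth; subst.
        assert (Hoa : ok G a') by (eapply ok_sub_ctx; [exact HokG| exact Hg1|];
          eapply subterm_trans; [apply isub_sub; constructor| exact Hg2]).
        assert (Hob : ok G b') by (eapply ok_sub_ctx; [exact HokG| exact Hg1|];
          eapply subterm_trans; [apply isub_sub; constructor| exact Hg2]).
        apply L_ls with (Blind a' b'); [auto| split; [exact I| exists gam; auto]| apply pR_ac with (Blind M R); [exact HB| exact Hg3| exact Hoh]| ].
        apply L_blind1 with a' b'; [apply ok_cons1; auto| simpl; auto| |].
        { apply pR_ac with R; [apply pR_weakc; [exact HRG| exact Hoh]| exact H6| okt]. }
        assert (HoM : ok G M) by (eapply ok_isub; [exact HoSG| constructor]).
        apply (IHs (Sign M K)); [simpl; lia| | |].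
        { apply R_signR.
          - okt.
          - apply R_id; [okt|].
            exists a'; split; [apply ectx_hole; simpl; auto|]. apply ac_eqE; auto. apply HoM.
          - repeat apply pR_weakc; auto; okt. }
        { eapply pL_weak; [exact Hq2| |].
          - intros a [<-|Ha]; simpl; auto 6.
          - intros a [<-|[<-|[<-|[<-|Ha]]]]; [apply HoSG|apply Hoa|apply Hob|apply Hoh|apply HokG; auto]. }
        { okt. }
      * apply (IHs (Sign M K)); [simpl; lia| | exact Hq2| auto].
        apply R_signR; auto.
    + apply ac_same_top in Hac; inversion Hac; subst.
      match goal with Hb : ac (Blind M R) ?B |- _ => rename Hb into HB end.
      apply ac_same_top in HB; inversion HB; subst.
      destruct (Fin_or_good A D G N HA HD Hi HokG) as [Hd|HW]; auto.
      assert (Hs1 : subterm a'0 (Sign (Blind a'0 b'0) b')).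
      { apply subterm_trans with (Blind a'0 b'0); apply isub_sub; constructor. }
      assert (Hs2 : subterm b'0 (Sign (Blind a'0 b'0) b')).
      { apply subterm_trans with (Blind a'0 b'0); apply isub_sub; constructor. }
      assert (ok G b'0) by (eapply ok_sub_ctx; eauto).
      assert (ok G b') by (eapply ok_sub_ctx; eauto; apply isub_sub; constructor).
      assert (Hac3 : ac (Sign M K) (Sign a'0 b')) by (apply ac_Sign; auto).
      assert (HoS' : ok G (Sign a'0 b')).
      { destruct (ok_cons_ctx _ _ _ Hok3) as [Hw3 Hn3].
        split; [apply HokG|]. split; [now apply (ac_wf _ _ Hac3)| eapply normal_ac; eauto]. }
      apply L_blind2 with a'0 b'0 b'; auto.
      * eapply (SIDE A D G N R b'0 (Sign (Blind a'0 b'0) b')); eauto.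
      * apply IH; [exact H| | | ].
        -- apply inv_cons_ac; auto; apply inv_cons_ac; auto.
        -- apply pR_weakc; [apply pR_weakc; auto| apply ok_cons1; auto].
        -- apply ok_cons2; auto.
  -
    pose proof (pL_ok _ _ H) as Hok3.
    assert (HoA0 : ok G A0) by (exact (ok_from_ctx _ _ _ _ _ Hok3 HokG)).
    destruct (Fin_or_good A D G M HA HD Hi HokG) as [Hd|HW]; auto.
    destruct Hgs as [Hg0 [v [[Hv|Hv] Hsv]]].
    + destruct (Hi v Hv) as [HvA|[y [Hy Hvy]]].
      * subst v. destruct (sub_size _ _ Hsv) as [Heq|Hlt].
        -- subst A0. apply IH; [exact H| apply inv_consA; auto| auto| auto].
        -- assert (HR0 : pR G A0).
           { eapply TR; eauto. destruct HW as [?|[? ?]]; [now left|right; split; auto].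
             now apply Afree_small. }
           apply (IHs A0); [exact Hlt| exact HR0| |exact HokG].
           apply IH; [exact H| apply inv_ext; auto| apply pR_weakc; auto| okt].
      * destruct (proj1 (ac_transfer v y Hvy) A0 Hg0 Hsv) as [A' [HA'y HA0A']].
        assert (HoA' : ok G A') by (eapply ok_sub_ctx; eauto).
        apply L_ls with A'; [auto| | |].
        -- split; [eapply ac_guarded; eauto| exists y; auto].
        -- eapply (SIDE A D G M A0 A' y); eauto.
        -- apply IH; [exact H| apply inv_cons_ac; auto| apply pR_weakc; auto| okt].
    + subst v.
      assert (HR0 : pR G A0).
      { eapply TR; eauto. destruct HW as [?|[? HTf]]; [now left|right; split; auto].
        eapply Afree_sub; eauto. }
      apply L_ls with A0; [auto| split; auto; exists M; auto| exact HR0|].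
      apply IH; [exact H| apply inv_ext; auto| apply pR_weakc; auto| okt].
Qed.

Lemma KL_all : forall n A, size A <= n -> KL A.
Proof.
  induction n as [|n IHn]; intros A HA.
  - destruct A; simpl in HA; lia.
  - intros G T HR HL Hok. apply (GenSim A) with (A :: G); auto.
    + intros B HB; apply IHn; lia.
    + intros x [<-|Hx]; [now left| right; exists x; auto using ac_refl].
Qed.

Lemma KL_any A : KL A.
Proof. now apply (KL_all (size A)). Qed.
Lemma ctxok_of G T : ok G T -> forall x, In x G -> wf x /\ normal x.
Proof. intros [H _]; auto. Qed.

Lemma LC G M : pL G M -> forall T, pL (M :: G) T -> ok G T -> pL G T.
Proof.
  intros H; induction H as [G M Hok HR | G M N T0 Hok Hin H IH | G M K N Hok Hin HK H IH
     | G M K L N Hok Hin1 Hin2 Hac H IH | G M K N Hok Hin HK H IH | G M R K N Hok Hin HR H IH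
     | G A M Hok Hgs HA H IH]; intros T HT HokT;
  pose proof (pL_ok _ _ HT) as HoT.
  - eapply KL_any; eauto.
  - pose proof (pL_ok _ _ H) as Ho.
    apply L_lp with M N; auto. apply IH.
    + eapply pL_weak; [exact HT| |].
      * intros a [<-|Ha]; simpl; auto.
      * intros a [<-|[<-|[<-|Ha]]]; [apply Ho|apply Ho|apply Ho| apply HokT; auto]; simpl; auto.
    + split; [apply Ho| apply HokT].
  - pose proof (pL_ok _ _ H) as Ho.
    apply L_le with M K; auto. apply IH.
    + eapply pL_weak; [exact HT| |].
      * intros a [<-|Ha]; simpl; auto.
      * intros a [<-|[<-|[<-|Ha]]]; [apply Ho|apply Ho|apply Ho| apply HokT; auto]; simpl; auto.
    + split; [apply Ho| apply HokT].
  - pose proof (pL_ok _ _ H) as Ho.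
    apply L_sign with M K L; auto. apply IH.
    + eapply pL_weak; [exact HT| |].
      * intros a [<-|Ha]; simpl; auto.
      * intros a [<-|[<-|Ha]]; [apply Ho|apply Ho| apply HokT; auto]; simpl; auto.
    + split; [apply Ho| apply HokT].
  - pose proof (pL_ok _ _ H) as Ho.
    apply L_blind1 with M K; auto. apply IH.
    + eapply pL_weak; [exact HT| |].
      * intros a [<-|Ha]; simpl; auto.
      * intros a [<-|[<-|[<-|Ha]]]; [apply Ho|apply Ho|apply Ho| apply HokT; auto]; simpl; auto.
    + split; [apply Ho| apply HokT].
  - pose proof (pL_ok _ _ H) as Ho.
    apply L_blind2 with M R K; auto. apply IH.
    + eapply pL_weak; [exact HT| |].
      * intros a [<-|Ha]; simpl; auto.
      * intros a [<-|[<-|[<-|Ha]]]; [apply Ho|apply Ho|apply Ho| apply HokT; auto]; simpl; auto.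
    + split; [apply Ho| apply HokT].
  - pose proof (pL_ok _ _ H) as Ho.
    apply (KL_any A); auto. apply IH.
    + eapply pL_weak; [exact HT| |].
      * intros a [<-|Ha]; simpl; auto.
      * intros a [<-|[<-|Ha]]; [apply Ho|apply Ho| apply HokT; auto]; simpl; auto.
    + split; [apply Ho| apply HokT].
Qed.

Lemma S_to_L G M : pS G M -> pL G M.
Proof.
  intros H; induction H.
  - apply L_r; auto. now apply R_id.
  - eapply LC; eauto.
  - eapply L_lp; eauto.
  - apply (pL_right (fun a b => Pair a b)); auto.
    + intros; now apply R_pR.
    + intros; constructor.
    + intros; constructor.
  - pose proof (pL_ok _ _ IHprovS2) as Ho.
    apply (LC G K); auto.
    apply L_le with M K; [| simpl; auto| |].
    + apply ok_cons1; auto. split; [apply H; auto| apply Ho; simpl; auto].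
    + apply R_id; [split; [|split; apply Ho; simpl; auto]|].
      * intros a [<-|Ha]; [apply Ho; simpl; auto| apply H; auto].
      * exists K; split; [apply ectx_hole; simpl; auto| apply eqE_refl].
    + eapply pL_weak; [exact IHprovS2| |].
      * intros a [<-|[<-|Ha]]; simpl; auto.
      * intros a [<-|[<-|[<-|Ha]]]; apply Ho; simpl; auto.
  - apply (pL_right (fun a b => Enc a b)); auto.
    + intros; now apply R_eR.
    + intros; constructor.
    + intros; constructor.
  - eapply L_sign; eauto.
  - apply (pL_right (fun a b => Sign a b)); auto.
    + intros; now apply R_signR.
    + intros; constructor.
    + intros; constructor.
  - pose proof (pL_ok _ _ IHprovS2) as Ho.
    apply (LC G K); auto.
    apply L_blind1 with M K; [| simpl; auto| |].
    + apply ok_cons1; auto. split; [apply H; auto| apply Ho; simpl; auto].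
    + apply R_id; [split; [|split; apply Ho; simpl; auto]|].
      * intros a [<-|Ha]; [apply Ho; simpl; auto| apply H; auto].
      * exists K; split; [apply ectx_hole; simpl; auto| apply eqE_refl].
    + eapply pL_weak; [exact IHprovS2| |].
      * intros a [<-|[<-|Ha]]; simpl; auto.
      * intros a [<-|[<-|[<-|Ha]]]; apply Ho; simpl; auto.
  - apply (pL_right (fun a b => Blind a b)); auto.
    + intros; now apply R_blindR.
    + intros; constructor.
    + intros; constructor.
  - pose proof (pL_ok _ _ IHprovS2) as Ho.
    apply (LC G R); auto.
    apply L_blind2 with M R K; [| simpl; auto| |].
    + apply ok_cons1; auto. split; [apply H; auto| apply Ho; simpl; auto].
    + apply R_id; [split; [|split; apply Ho; simpl; auto]|].
      * intros a [<-|Ha]; [apply Ho; simpl; auto| apply H; auto].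
      * exists R; split; [apply ectx_hole; simpl; auto| apply eqE_refl].
    + eapply pL_weak; [exact IHprovS2| |].
      * intros a [<-|[<-|Ha]]; simpl; auto.
      * intros a [<-|[<-|[<-|Ha]]]; apply Ho; simpl; auto.
  - eapply LC; eauto.
Qed.

Lemma R_to_S G M : pR G M -> pS G M.
Proof.
  intros H; induction H.
  - now apply S_id.
  - now apply S_pR.
  - now apply S_eR.
  - now apply S_signR.
  - now apply S_blindR.
Qed.

Lemma L_to_S G M : pL G M -> pS G M.
Proof.
  intros H; induction H.
  - now apply R_to_S.
  - eapply S_pL; eauto.
  - eapply S_eL; eauto using R_to_S.
  - eapply S_signL; eauto.
  - eapply S_blindL1; eauto using R_to_S.
  - eapply S_blindL2; eauto using R_to_S.
  - eapply S_gs; eauto using R_to_S.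
Qed.

Lemma equiv G M : pS G M <-> pL G M.
Proof. split; [apply S_to_L| apply L_to_S]. Qed.
End Main.

Theorem proposition5
  (F : Type) (arity : F -> nat) (oplus : option F) (RE : list (pat F * pat F))
  (Hoplus : forall f, oplus = Some f -> arity f = 2)
  (Hrules : forall l r, In (l, r) RE -> wf_pat arity l /\ wf_pat arity r)
  (Hterm : terminating_modAC arity oplus RE)
  (Hconf : confluent_modAC arity oplus RE) :
  forall (Gamma : list (term F)) (M : term F),
    provS arity oplus RE Gamma M <-> provL arity oplus RE Gamma M.
Proof.
  intros Gamma M. eapply equiv; eauto.
Qed.

Print Assumptions proposition5.
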